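(* Let $f,g:[a;b]\to\mathbb{R}$ be two regulated functions which have no common points of discontinuity, and let $\xi\in[a;b]$. Let $\eta_0\ge\eta_1\ge\ldots$ and $\theta_0\ge\theta_1\ge\ldots$ be two sequences of non-negative numbers with $\eta_k\downarrow0$, $\theta_k\downarrow0$ as $k\to+\infty$; set $\eta_{-1}:=\sup_{a\le t\le b}|f(t)-f(a)|$, $\theta_{-1}:=\sup_{a\le t\le b}|g(b)-g(t)|$ and \[ S:=\sum_{k=0}^{+\infty}2^{k}\eta_{k-1}\, TV(g,[a;b],\theta_k)+\sum_{k=0}^{+\infty}2^{k}\theta_k\, TV(f,[a;b],\eta_k),\qquad \tilde S:=\sum_{k=0}^{+\infty}2^{k}\theta_{k-1}\, TV(f,[a;b],\eta_k)+\sum_{k=0}^{+\infty}2^{k}\eta_k\, TV(g,[a;b],\theta_k). \] If $S<+\infty$ or $\tilde S<+\infty$, then the Riemann–Stieltjes integral $\int_a^b f\,\mathrm{d}g$ exists and \[ \left|\int_a^b f\,\mathrm{d}g-f(\xi)\left[g(b)-g(a)\right]\right|\le 2\min\{S,\tilde S\}. \]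
   Context: A function $h:[a;b]\to\mathbb{R}$ is regulated if the one-sided finite limits $\lim_{t\to a+}h(t)$, $\lim_{t\to b-}h(t)$ exist and, for every $x\in(a;b)$, both finite limits $\lim_{t\to x-}h(t)$ and $\lim_{t\to x+}h(t)$ exist. The total variation is $TV(h,[a;b],0)=\sup_n\sup_{a\le t_1<\dots<t_n\le b}\sum_{i=2}^{n}|h(t_i)-h(t_{i-1})|$. For $\delta\ge0$, the truncated variation is $TV(h,[a;b],\delta):=\inf\{TV(u,[a;b],0):\sup_{a\le t\le b}|h(t)-u(t)|\le\delta/2\}$; for regulated $h$ and $\delta>0$ it equals $\sup_n\sup_{a\le t_1<\dots<t_n\le b}\sum_{i=2}^{n}\max\{|h(t_i)-h(t_{i-1})|-\delta,0\}$. The Riemann–Stieltjes integral $\int_a^b f\,\mathrm{d}g$ exists if the sums $\sum_i f(\nu_i)[g(a_i)-g(a_{i-1})]$ over partitions $a=a_0<\dots<a_l=b$ with tags $\nu_i\in[a_{i-1};a_i]$ converge to a common limit as the mesh tends to $0$, independently of the tags. *)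

(* Defs.v *)
From Stdlib Require Import Reals.
From Coquelicot Require Import Coquelicot.
Open Scope R_scope.

Definition has_right_lim (h : R -> R) (b x : R) : Prop :=
  exists l : R, forall eps, 0 < eps -> exists delta, 0 < delta /\
    forall t, x < t -> t < x + delta -> t <= b -> Rabs (h t - l) < eps.

Definition has_left_lim (h : R -> R) (a x : R) : Prop :=
  exists l : R, forall eps, 0 < eps -> exists delta, 0 < delta /\
    forall t, x - delta < t -> t < x -> a <= t -> Rabs (h t - l) < eps.

Definition regulated (h : R -> R) (a b : R) : Prop :=
  (forall x, a <= x < b -> has_right_lim h b x) /\
  (forall x, a < x <= b -> has_left_lim h a x).

Definition cont_on_at (h : R -> R) (a b x : R) : Prop :=
  forall eps, 0 < eps -> exists delta, 0 < delta /\
    forall t, a <= t <= b -> Rabs (t - x) < delta -> Rabs (h t - h x) < eps.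

Definition no_common_discontinuity (f g : R -> R) (a b : R) : Prop :=
  forall x, a <= x <= b -> cont_on_at f a b x \/ cont_on_at g a b x.

Fixpoint fsum (F : nat -> R) (n : nat) : R :=
  match n with O => 0 | S m => fsum F m + F m end.

Definition TV0 (h : R -> R) (a b : R) : Rbar :=
  Lub_Rbar (fun s => exists (n : nat) (t : nat -> R),
    a <= t O /\ t n <= b /\ (forall i, (i < n)%nat -> t i < t (S i)) /\
    s = fsum (fun i => Rabs (h (t (S i)) - h (t i))) n).

Definition TV (h : R -> R) (a b delta : R) : Rbar :=
  Glb_Rbar (fun s => exists u : R -> R,
    (forall t, a <= t <= b -> Rabs (h t - u t) <= delta / 2) /\
    TV0 u a b = Finite s).

Definition sup_dev (h : R -> R) (a b c : R) : Rbar :=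
  Lub_Rbar (fun s => exists t, a <= t <= b /\ s = Rabs (h t - h c)).

(* the shifted sequence k |-> x_{k-1}, with x_{-1} := xm1 *)
Definition shift_seq (xm1 : Rbar) (x : nat -> R) (k : nat) : Rbar :=
  match k with O => xm1 | S k' => Finite (x k') end.

Fixpoint Rbar_psum (u : nat -> Rbar) (n : nat) : Rbar :=
  match n with O => Finite 0 | S m => Rbar_plus (Rbar_psum u m) (u m) end.

Definition Rbar_series (u : nat -> Rbar) : Rbar := Sup_seq (Rbar_psum u).

Definition wsum (c : nat -> Rbar) (h : R -> R) (a b : R) (d : nat -> R) : Rbar :=
  Rbar_series (fun k => Rbar_mult (Finite (2 ^ k)) (Rbar_mult (c k) (TV h a b (d k)))).

(* Riemann–Stieltjes sum for partition p_0 = a < ... < p_l = b, tags nu_i in [p_{i-1},p_i] *)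
Definition RS_sum (f g : R -> R) (l : nat) (p nu : nat -> R) : R :=
  fsum (fun i => f (nu (S i)) * (g (p (S i)) - g (p i))) l.

Definition is_RS_integral (f g : R -> R) (a b I : R) : Prop :=
  forall eps, 0 < eps -> exists delta, 0 < delta /\
    forall (l : nat) (p nu : nat -> R),
      p O = a -> p l = b ->
      (forall i, (i < l)%nat -> p i < p (S i)) ->
      (forall i, (i < l)%nat -> p (S i) - p i < delta) ->
      (forall i, (i < l)%nat -> p i <= nu (S i) <= p (S i)) ->
      Rabs (RS_sum f g l p nu - I) < eps.

Definition nonincr_to_zero (x : nat -> R) : Prop :=
  (forall k, 0 <= x k) /\ (forall k, x (S k) <= x k) /\ is_lim_seq x 0.

(* Main.v *)
Require Import Defs.
From Stdlib Require Import Reals Lra Lia List Classical ClassicalEpsilon ZArith.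
From Coquelicot Require Import Coquelicot.
Import ListNotations.
Open Scope R_scope.

Lemma fsum_ext F G n : (forall i, (i < n)%nat -> F i = G i) -> fsum F n = fsum G n.
Proof. induction n; simpl; intros H; auto. rewrite IHn by (intros; apply H; lia). rewrite H by lia. auto. Qed.

Lemma fsum_plus F G n : fsum (fun i => F i + G i) n = fsum F n + fsum G n.
Proof. induction n; simpl; [lra|rewrite IHn; lra]. Qed.

Lemma fsum_minus F G n : fsum (fun i => F i - G i) n = fsum F n - fsum G n.
Proof. induction n; simpl; [lra|rewrite IHn; lra]. Qed.

Lemma fsum_scal c F n : fsum (fun i => c * F i) n = c * fsum F n.
Proof. induction n; simpl; [lra|rewrite IHn; lra]. Qed.

Lemma fsum_le F G n : (forall i, (i < n)%nat -> F i <= G i) -> fsum F n <= fsum G n.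
Proof. induction n; simpl; intros H; [lra|]. assert (F n <= G n) by (apply H; lia).
 assert (fsum F n <= fsum G n) by (apply IHn; intros; apply H; lia). lra. Qed.

Lemma fsum_nonneg F n : (forall i, (i < n)%nat -> 0 <= F i) -> 0 <= fsum F n.
Proof. intros H. replace 0 with (fsum (fun _ => 0) n). apply fsum_le; auto.
 induction n; simpl; auto. rewrite IHn; [lra|intros; apply H; lia]. Qed.

Lemma fsum_abs F n : Rabs (fsum F n) <= fsum (fun i => Rabs (F i)) n.
Proof. induction n; simpl. rewrite Rabs_R0; lra.
 eapply Rle_trans. apply Rabs_triang. lra. Qed.

Lemma fsum_shift F n : fsum F (S n) = F O + fsum (fun i => F (S i)) n.
Proof. induction n. simpl; lra.
 change (fsum F (S (S n))) with (fsum F (S n) + F (S n)). rewrite IHn. simpl. lra. Qed.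

Lemma fsum_add F n m : fsum F (n + m) = fsum F n + fsum (fun i => F (n + i)%nat) m.
Proof. induction m. rewrite Nat.add_0_r; simpl; lra.
 rewrite Nat.add_succ_r. simpl. rewrite IHm. lra. Qed.

Lemma fsum_telescope (a : nat -> R) n : fsum (fun i => a (S i) - a i) n = a n - a O.
Proof. induction n; simpl; [lra| rewrite IHn; lra]. Qed.

Lemma fsum_swap (F : nat -> nat -> R) n m :
  fsum (fun i => fsum (fun j => F i j) m) n = fsum (fun j => fsum (fun i => F i j) n) m.
Proof. induction n; simpl.
 - induction m; simpl; lra.
 - rewrite IHn. rewrite <- fsum_plus. reflexivity. Qed.

Fixpoint VarL (h : R -> R) (l : list R) : R :=
  match l with
  | [] => 0
  | x :: l' => match l' with [] => 0 | y :: _ => Rabs (h y - h x) + VarL h l' end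
  end.

Fixpoint srt (l : list R) : Prop :=
  match l with
  | x :: ((y :: _) as l') => x <= y /\ srt l'
  | _ => True
  end.

Definition inab (a b : R) (l : list R) : Prop := forall x, In x l -> a <= x <= b.

Lemma Var_nonneg h l : 0 <= VarL h l.
Proof. induction l as [|x l IH]; simpl; [lra|]. destruct l; [lra|].
 pose proof (Rabs_pos (h r - h x)). lra. Qed.

Lemma Var_cons2 h x y l : VarL h (x :: y :: l) = Rabs (h y - h x) + VarL h (y :: l).
Proof. reflexivity. Qed.

Lemma Var_app h l1 x l2 : VarL h (l1 ++ x :: l2) = VarL h (l1 ++ [x]) + VarL h (x :: l2).
Proof. induction l1 as [|y l1 IH]. simpl; lra.
 destruct l1 as [|z l1]. simpl; lra.
 change ((y :: z :: l1) ++ x :: l2) with (y :: z :: (l1 ++ x :: l2)).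
 change ((y :: z :: l1) ++ [x]) with (y :: z :: (l1 ++ [x])).
 rewrite !Var_cons2. change (z :: l1 ++ x :: l2) with ((z :: l1) ++ x :: l2).
 rewrite IH. simpl. lra. Qed.

Lemma Var_app_ge h l1 l2 : VarL h l1 + VarL h l2 <= VarL h (l1 ++ l2).
Proof. destruct l2 as [|x l2]. rewrite app_nil_r. simpl; lra.
 rewrite Var_app. assert (VarL h l1 <= VarL h (l1 ++ [x])).
 { induction l1 as [|y l1 IH]; simpl. lra. destruct l1; simpl in *.
   pose proof (Rabs_pos (h x - h y)); lra. lra. }
 lra. Qed.

Lemma Var_minus h1 h2 l : VarL (fun x => h1 x - h2 x) l <= VarL h1 l + VarL h2 l.
Proof. induction l as [|x l IH]. simpl; lra. destruct l as [|y l]. simpl; lra.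
 rewrite !Var_cons2.
 assert (Rabs (h1 y - h2 y - (h1 x - h2 x)) <= Rabs (h1 y - h1 x) + Rabs (h2 y - h2 x)).
 { replace (h1 y - h2 y - (h1 x - h2 x)) with ((h1 y - h1 x) + - (h2 y - h2 x)) by ring.
   eapply Rle_trans. apply Rabs_triang. rewrite Rabs_Ropp. lra. }
 lra. Qed.

Lemma Var_ext h1 h2 a b l : inab a b l -> (forall x, a <= x <= b -> h1 x = h2 x) -> VarL h1 l = VarL h2 l.
Proof. intros Hl H. induction l as [|x l IH]. auto. destruct l as [|y l]. auto.
 rewrite !Var_cons2. rewrite IH. rewrite (H x), (H y). auto.
 apply Hl; simpl; auto. apply Hl; simpl; auto. intros z Hz; apply Hl; simpl; auto. Qed.

Fixpoint dd (l : list R) : list R :=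
  match l with
  | x :: ((y :: _) as l') => if Req_EM_T x y then dd l' else x :: dd l'
  | _ => l
  end.

Lemma dd_head x l : exists l', dd (x :: l) = x :: l'.
Proof. revert x. induction l as [|y l IH]; intros x; simpl. eauto.
 destruct (Req_EM_T x y). subst. apply IH. eauto. Qed.

Lemma dd_Var h l : VarL h (dd l) = VarL h l.
Proof. induction l as [|x l IH]. auto. destruct l as [|y l]. auto.
 change (dd (x :: y :: l)) with (if Req_EM_T x y then dd (y :: l) else x :: dd (y :: l)).
 destruct (Req_EM_T x y). subst. rewrite IH. rewrite Var_cons2. rewrite Rminus_diag, Rabs_R0. lra.
 destruct (dd_head y l) as [l' Hl']. rewrite Hl' in *. rewrite !Var_cons2. rewrite IH. auto. Qed.

Lemma dd_in x l : In x (dd l) -> In x l.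
Proof. induction l as [|y l IH]; simpl; auto. destruct l as [|z l]; auto.
 destruct (Req_EM_T y z); intros H. right; auto. destruct H; auto. Qed.

Fixpoint strict (l : list R) : Prop :=
  match l with
  | x :: ((y :: _) as l') => x < y /\ strict l'
  | _ => True
  end.

Lemma dd_strict l : srt l -> strict (dd l).
Proof. induction l as [|x l IH]. simpl; auto. destruct l as [|y l]. simpl; auto.
 intros [H1 H2].
 change (dd (x :: y :: l)) with (if Req_EM_T x y then dd (y :: l) else x :: dd (y :: l)).
 destruct (Req_EM_T x y). apply IH; auto.
 destruct (dd_head y l) as [l' Hl']. rewrite Hl' in *.
 split. lra. apply IH; auto. Qed.

Lemma strict_chain h l : strict l -> l <> [] ->
  let n := pred (length l) in let t := fun i => nth i l 0 in
  (forall i, (i < n)%nat -> t i < t (S i)) /\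
  VarL h l = fsum (fun i => Rabs (h (t (S i)) - h (t i))) n.
Proof. induction l as [|x l IH]; intros Hs Hne. congruence.
 destruct l as [|y l]. simpl. split; intros; [exfalso; lia|auto].
 destruct Hs as [Hxy Hs]. destruct (IH Hs) as [IH1 IH2]. congruence.
 cbv zeta in IH1, IH2. split.
 - intros i Hi. destruct i. simpl. auto. simpl in Hi. apply (IH1 i). simpl. lia.
 - rewrite Var_cons2. rewrite IH2.
   change (Init.Nat.pred (length (x :: y :: l))) with (S (Init.Nat.pred (length (y :: l)))).
   rewrite fsum_shift. reflexivity. Qed.

Lemma TV0_ge0 h a b : a <= b -> Rbar_le 0 (TV0 h a b).
Proof. intros Hab. unfold TV0. destruct (Lub_Rbar_correct (fun s => exists (n : nat) (t : nat -> R),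
    a <= t O /\ t n <= b /\ (forall i, (i < n)%nat -> t i < t (S i)) /\
    s = fsum (fun i => Rabs (h (t (S i)) - h (t i))) n)) as [H1 H2].
 apply H1. exists O, (fun _ => a). simpl. repeat split; auto; try lra. intros; lia. Qed.

Lemma Var_le_TV0 h a b l : a <= b -> srt l -> inab a b l -> Rbar_le (VarL h l) (TV0 h a b).
Proof. intros Hab Hs Hin. rewrite <- dd_Var.
 destruct (dd l) as [|x l'] eqn:E. simpl. apply TV0_ge0; auto.
 assert (Hst : strict (x :: l')) by (rewrite <- E; apply dd_strict; auto).
 destruct (strict_chain h (x :: l') Hst) as [H1 H2]. congruence.
 rewrite H2. unfold TV0.
 destruct (Lub_Rbar_correct (fun s => exists (n : nat) (t : nat -> R),
    a <= t O /\ t n <= b /\ (forall i, (i < n)%nat -> t i < t (S i)) /\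
    s = fsum (fun i => Rabs (h (t (S i)) - h (t i))) n)) as [Hub _].
 apply Hub. exists (pred (length (x :: l'))), (fun i => nth i (x :: l') 0). split; [|split; [|split]]; [ | | apply H1 | reflexivity].
 - simpl. assert (In x (dd l)) by (rewrite E; simpl; auto). apply dd_in in H. apply Hin in H. lra.
 - assert (In (nth (pred (length (x :: l'))) (x :: l') 0) (dd l)).
   { rewrite E. apply nth_In. simpl. lia. }
   apply dd_in in H. apply Hin in H. lra. Qed.

Definition TVset (h : R -> R) a b delta := fun s => exists u : R -> R,
    (forall t, a <= t <= b -> Rabs (h t - u t) <= delta / 2) /\ TV0 u a b = Finite s.

Lemma TV_eq h a b d : TV h a b d = Glb_Rbar (TVset h a b d).
Proof. reflexivity. Qed.

Lemma TV_ge0 h a b d : a <= b -> Rbar_le 0 (TV h a b d).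
Proof. intros Hab. rewrite TV_eq. destruct (Glb_Rbar_correct (TVset h a b d)) as [_ H].
 apply H. intros s [u [_ Hu]]. pose proof (TV0_ge0 u a b Hab). rewrite Hu in H0. simpl in *. auto. Qed.

Lemma TV_mono h a b d1 d2 : d1 <= d2 -> Rbar_le (TV h a b d2) (TV h a b d1).
Proof. intros Hd. rewrite !TV_eq.
 destruct (Glb_Rbar_correct (TVset h a b d2)) as [H1 _].
 destruct (Glb_Rbar_correct (TVset h a b d1)) as [_ H2].
 apply H2. intros s [u [Hu1 Hu2]]. apply H1. exists u. split; auto.
 intros t Ht. specialize (Hu1 t Ht). lra. Qed.

Lemma Rbar_mult_pinfty c P : 0 <= c -> Rbar_mult (Finite c) p_infty = Finite P -> c = 0 /\ P = 0.
Proof. intros Hc H. unfold Rbar_mult, Rbar_mult' in H.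
 destruct (Rle_dec 0 c); [|lra]. destruct (Rle_lt_or_eq_dec 0 c r); inversion H. subst; auto. Qed.

Lemma approx (h : R -> R) (a b d eps : R) : a <= b -> 0 <= d -> 0 < eps ->
  exists u, (forall t, a <= t <= b -> Rabs (h t - u t) <= d / 2) /\
  forall c P, 0 <= c -> Rbar_mult (Finite c) (TV h a b d) = Finite P ->
  forall l, srt l -> inab a b l -> c * VarL u l <= P + c * eps.
Proof. intros Hab Hd He. pose proof (TV_ge0 h a b d Hab) as Hge.
 destruct (TV h a b d) as [t| |] eqn:ET.
 -
   assert (exists s, TVset h a b d s /\ s < t + eps) as [s [[u [Hu1 Hu2]] Hs]].
   { apply NNPP; intros Hn. rewrite TV_eq in ET.
     destruct (Glb_Rbar_correct (TVset h a b d)) as [_ H2].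
     assert (Rbar_le (t + eps) (Glb_Rbar (TVset h a b d))).
     { apply H2. intros s Hs. simpl. apply Rnot_lt_le. intros Hlt. apply Hn. eauto. }
     rewrite ET in H. simpl in H. lra. }
   exists u. split; auto. intros c P Hc HP l Hl Hin. simpl in HP. inversion HP.
   pose proof (Var_le_TV0 u a b l Hab Hl Hin) as HV. rewrite Hu2 in HV. simpl in HV.
   assert (c * VarL u l <= c * (t + eps)) by (apply Rmult_le_compat_l; lra). lra.
 - exists h. split. intros; rewrite Rminus_diag, Rabs_R0; lra.
   intros c P Hc HP l _ _. destruct (Rbar_mult_pinfty c P Hc HP). subst. lra.
 - simpl in Hge. contradiction. Qed.

Lemma approx_chain_fin (h : R -> R) (a b d eps : R) : a <= b -> 0 <= d -> 0 < eps -> TV h a b d <> p_infty ->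
  exists u, (forall t, a <= t <= b -> Rabs (h t - u t) <= d / 2) /\
  forall l, srt l -> inab a b l -> VarL u l <= real (TV h a b d) + eps.
Proof. intros Hab Hd He Hf. destruct (approx h a b d eps Hab Hd He) as [u [Hu1 Hu2]].
 exists u; split; auto. intros l Hl Hin. pose proof (TV_ge0 h a b d Hab).
 destruct (TV h a b d) as [t| |] eqn:E; try contradiction; try (simpl in H; contradiction).
 specialize (Hu2 1 t ltac:(lra)). simpl in Hu2. rewrite Rmult_1_l in Hu2.
 specialize (Hu2 eq_refl l Hl Hin). simpl. lra. Qed.

Fixpoint Ec (h w : R -> R) (xi r0 : R) (cs : list (R * R)) : R :=
  match cs with
  | [] => 0
  | (s, r) :: cs' => (h s - h xi) * (w r - w r0) + Ec h w xi r cs'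
  end.

Fixpoint lastr (r0 : R) (cs : list (R * R)) : R :=
  match cs with [] => r0 | (_, r) :: cs' => lastr r cs' end.

Fixpoint vcells (r0 : R) (cs : list (R * R)) : Prop :=
  match cs with [] => True | (s, r) :: cs' => r0 <= s <= r /\ vcells r cs' end.

Definition pts r0 (cs : list (R * R)) := r0 :: map snd cs.

Fixpoint splitc (xi : R) (cs : list (R * R)) : list (R * R) * list (R * R) :=
  match cs with
  | [] => ([], [])
  | (s, r) :: cs' => if Rle_dec s xi then
       let (L, Rr) := splitc xi cs' in ((s, r) :: L, Rr) else ([], cs)
  end.

Definition chn xi cs := map fst (fst (splitc xi cs)) ++ xi :: map fst (snd (splitc xi cs)).

Definition fm (h1 h2 : R -> R) := fun x => h1 x - h2 x.

Lemma Ec_lin1 h1 h2 w xi r0 cs : Ec (fm h1 h2) w xi r0 cs = Ec h1 w xi r0 cs - Ec h2 w xi r0 cs.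
Proof. revert r0; induction cs as [|[s r] cs IH]; intros r0; simpl. lra. rewrite IH. unfold fm. ring. Qed.

Lemma Ec_lin2 h w1 w2 xi r0 cs : Ec h (fm w1 w2) xi r0 cs = Ec h w1 xi r0 cs - Ec h w2 xi r0 cs.
Proof. revert r0; induction cs as [|[s r] cs IH]; intros r0; simpl. lra. rewrite IH. unfold fm. ring. Qed.

Lemma Ec_c1 c w xi r0 cs : Ec (fun _ => c) w xi r0 cs = 0.
Proof. revert r0; induction cs as [|[s r] cs IH]; intros r0; simpl. lra. rewrite IH. ring. Qed.

Lemma Ec_c2 h c xi r0 cs : Ec h (fun _ => c) xi r0 cs = 0.
Proof. revert r0; induction cs as [|[s r] cs IH]; intros r0; simpl. lra. rewrite IH. ring. Qed.

Lemma vcells_last r0 cs : vcells r0 cs -> r0 <= lastr r0 cs.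
Proof. revert r0; induction cs as [|[s r] cs IH]; intros r0; simpl. lra.
 intros [H1 H2]. specialize (IH r H2). lra. Qed.

Lemma vcells_in r0 cs : vcells r0 cs -> forall s r, In (s, r) cs ->
  r0 <= s <= r /\ r <= lastr r0 cs.
Proof. revert r0; induction cs as [|[s r] cs IH]; intros r0; simpl. tauto.
 intros [H1 H2] s' r' [E|Hin]. inversion E; subst. pose proof (vcells_last _ _ H2). lra.
 destruct (IH r H2 s' r' Hin). lra. Qed.

Lemma Ec_ext h1 h2 w1 w2 xi r0 cs a b : vcells r0 cs -> a <= r0 -> lastr r0 cs <= b -> a <= xi <= b ->
  (forall x, a <= x <= b -> h1 x = h2 x) -> (forall x, a <= x <= b -> w1 x = w2 x) ->
  Ec h1 w1 xi r0 cs = Ec h2 w2 xi r0 cs.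
Proof. intros Hv Ha Hb Hxi Hh Hw. revert r0 Hv Ha Hb. induction cs as [|[s r] cs IH]; intros r0 Hv Ha Hb; simpl. auto.
 simpl in Hv, Hb. destruct Hv as [H1 H2]. pose proof (vcells_last _ _ H2).
 rewrite (IH r) by (auto; lra). rewrite (Hh s), (Hh xi), (Hw r), (Hw r0) by lra. auto. Qed.

Lemma Ec_bound_a h w xi r0 cs C : vcells r0 cs -> 0 <= C ->
  (forall s r, In (s, r) cs -> Rabs (h s - h xi) <= C) ->
  Rabs (Ec h w xi r0 cs) <= C * VarL w (pts r0 cs).
Proof. unfold pts. revert r0; induction cs as [|[s r] cs IH]; intros r0 Hv HC Hb.
 simpl; rewrite Rabs_R0; lra. destruct Hv as [_ Hv]. cbn [Ec map].
 change (snd (s, r)) with r. change (fst (s, r)) with s. rewrite Var_cons2, Rmult_plus_distr_l.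
 eapply Rle_trans. apply Rabs_triang. rewrite Rabs_mult.
 assert (Rabs (h s - h xi) <= C) by (apply (Hb s r); simpl; auto).
 assert (Rabs (Ec h w xi r cs) <= C * VarL w (r :: map snd cs)).
 { apply IH; auto. intros s0 r1 Hin; apply (Hb s0 r1); simpl; auto. }
 assert (Rabs (h s - h xi) * Rabs (w r - w r0) <= C * Rabs (w r - w r0)) by
   (apply Rmult_le_compat_r; auto; apply Rabs_pos). lra. Qed.

Lemma Ec_anchor h w xi xi' r0 cs :
  Ec h w xi r0 cs = Ec h w xi' r0 cs + (h xi' - h xi) * (w (lastr r0 cs) - w r0).
Proof. revert r0; induction cs as [|[s r] cs IH]; intros r0; simpl. ring. rewrite IH. ring. Qed.

Lemma Ec_app h w xi r0 L R : Ec h w xi r0 (L ++ R) = Ec h w xi r0 L + Ec h w xi (lastr r0 L) R.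
Proof. revert r0; induction L as [|[s r] L IH]; intros r0; simpl. ring. rewrite IH. ring. Qed.

Lemma lastr_app r0 L R : lastr r0 (L ++ R) = lastr (lastr r0 L) R.
Proof. revert r0; induction L as [|[s r] L IH]; intros r0; simpl; auto. Qed.

Lemma vcells_app r0 L R : vcells r0 (L ++ R) <-> vcells r0 L /\ vcells (lastr r0 L) R.
Proof. revert r0; induction L as [|[s r] L IH]; intros r0; simpl. tauto. rewrite IH. tauto. Qed.

Definition oscb (w : R -> R) (x0 x1 C : R) := forall x y, x0 <= x <= x1 -> x0 <= y <= x1 -> Rabs (w x - w y) <= C.

Lemma oscb_sub w x0 x1 y0 y1 C : x0 <= y0 -> y1 <= x1 -> oscb w x0 x1 C -> oscb w y0 y1 C.
Proof. unfold oscb; intros; apply H1; lra. Qed.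

Lemma Ec_right h w xi r0 cs C : vcells r0 cs -> oscb w r0 (lastr r0 cs) C ->
  Rabs (Ec h w xi r0 cs) <= C * VarL h (xi :: map fst cs).
Proof. revert xi r0; induction cs as [|[s r] cs IH]; intros xi r0 Hv Ho. simpl. rewrite Rabs_R0.
 assert (0 <= C) by (simpl in Ho; specialize (Ho r0 r0); rewrite Rminus_diag, Rabs_R0 in Ho; apply Ho; lra). nra.
 simpl in Hv. destruct Hv as [H1 Hv]. pose proof (vcells_last _ _ Hv).
 assert (Ec h w xi r0 ((s, r) :: cs) = (h s - h xi) * (w (lastr r cs) - w r0) + Ec h w s r cs).
 { simpl. rewrite (Ec_anchor h w xi s r cs). ring. }
 rewrite H0. simpl map. rewrite Var_cons2.
 eapply Rle_trans. apply Rabs_triang. rewrite Rabs_mult.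
 assert (Rabs (w (lastr r cs) - w r0) <= C) by (apply Ho; simpl; lra).
 assert (Rabs (Ec h w s r cs) <= C * VarL h (s :: map fst cs)).
 { apply IH; auto. eapply oscb_sub; [| |exact Ho]; simpl; lra. }
 assert (Rabs (h s - h xi) * Rabs (w (lastr r cs) - w r0) <= Rabs (h s - h xi) * C) by
   (apply Rmult_le_compat_l; auto; apply Rabs_pos).
 rewrite Rmult_plus_distr_l. lra. Qed.

Lemma Ec_left h w xi r0 cs C : vcells r0 cs -> oscb w r0 (lastr r0 cs) C ->
  Rabs (Ec h w xi r0 cs) <= C * VarL h (map fst cs ++ [xi]).
Proof. revert xi r0. induction cs as [|[s r] cs IH] using rev_ind; intros xi r0 Hv Ho. simpl. rewrite Rabs_R0.
 assert (0 <= C) by (simpl in Ho; specialize (Ho r0 r0); rewrite Rminus_diag, Rabs_R0 in Ho; apply Ho; lra). nra.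
 apply vcells_app in Hv. destruct Hv as [Hv1 Hv2]. simpl in Hv2. destruct Hv2 as [H1 _].
 pose proof (vcells_last _ _ Hv1).
 rewrite lastr_app in Ho. simpl in Ho.
 assert (Ec h w xi r0 (cs ++ [(s, r)]) = Ec h w s r0 cs + (h s - h xi) * (w r - w r0)).
 { rewrite Ec_app. rewrite (Ec_anchor h w xi s r0 cs). simpl. ring. }
 rewrite H0. rewrite map_app. simpl map. rewrite <- app_assoc. simpl.
 rewrite (Var_app h (map fst cs) s [xi]).
 change (VarL h [s; xi]) with (Rabs (h xi - h s) + VarL h [xi]). simpl (VarL h [xi]).
 eapply Rle_trans. apply Rabs_triang. rewrite Rabs_mult.
 assert (Rabs (w r - w r0) <= C) by (apply Ho; lra).
 assert (Rabs (Ec h w s r0 cs) <= C * VarL h (map fst cs ++ [s])).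
 { apply IH; auto. eapply oscb_sub; [| |exact Ho]; lra. }
 assert (Rabs (h s - h xi) * Rabs (w r - w r0) <= Rabs (h s - h xi) * C) by
   (apply Rmult_le_compat_l; auto; apply Rabs_pos).
 rewrite (Rabs_minus_sym (h xi) (h s)), Rplus_0_r, Rmult_plus_distr_l. lra. Qed.

Lemma splitc_app xi cs : fst (splitc xi cs) ++ snd (splitc xi cs) = cs.
Proof. induction cs as [|[s r] cs IH]; simpl; auto. destruct (Rle_dec s xi).
 destruct (splitc xi cs) as [L Rr]. simpl in *. rewrite IH; auto. simpl; auto. Qed.

Lemma Ec_bound_b h w xi r0 cs C : vcells r0 cs -> oscb w r0 (lastr r0 cs) C ->
  Rabs (Ec h w xi r0 cs) <= C * VarL h (chn xi cs).
Proof. intros Hv Ho. unfold chn. pose proof (splitc_app xi cs) as E.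
 set (L := fst (splitc xi cs)) in *. set (Rr := snd (splitc xi cs)) in *.
 rewrite <- E in Hv, Ho. rewrite <- E at 1.
 rewrite Var_app. rewrite Ec_app. apply vcells_app in Hv. destruct Hv as [Hv1 Hv2].
 rewrite lastr_app in Ho. pose proof (vcells_last _ _ Hv1). pose proof (vcells_last _ _ Hv2).
 eapply Rle_trans. apply Rabs_triang. rewrite Rmult_plus_distr_l. apply Rplus_le_compat.
 apply Ec_left; auto. eapply oscb_sub; [| |exact Ho]; lra.
 apply Ec_right; auto. eapply oscb_sub; [| |exact Ho]; lra. Qed.

Lemma srt_app_cons l1 x l2 : srt (l1 ++ [x]) -> srt (x :: l2) -> srt (l1 ++ x :: l2).
Proof. induction l1 as [|y l1 IH]. simpl; auto. intros H1 H2. destruct l1 as [|z l1].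
 simpl in *. destruct H1; split; auto.
 change (srt (y :: z :: (l1 ++ x :: l2))). change (srt (y :: z :: (l1 ++ [x]))) in H1.
 destruct H1 as [H1 H3]. split; auto. Qed.

Lemma splitc_left xi cs : forall s r, In (s, r) (fst (splitc xi cs)) -> s <= xi.
Proof. induction cs as [|[s r] cs IH]; simpl; [tauto|]. destruct (Rle_dec s xi).
 destruct (splitc xi cs) as [L Rr] eqn:E. try rewrite E in IH. simpl in *. intros s' r' [H|H]. inversion H; subst; auto.
 apply (IH s' r'); auto. simpl; tauto. Qed.

Lemma splitc_right xi cs : match snd (splitc xi cs) with [] => True | (s, _) :: _ => xi <= s end.
Proof. induction cs as [|[s r] cs IH]; simpl; auto. destruct (Rle_dec s xi).
 destruct (splitc xi cs) as [L Rr] eqn:E. try rewrite E in IH. simpl in *. auto. simpl. lra. Qed.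

Lemma srt_tags_left r0 cs xi : vcells r0 cs -> (forall s r, In (s, r) cs -> s <= xi) ->
  srt (map fst cs ++ [xi]).
Proof. revert r0; induction cs as [|[s r] cs IH]; intros r0 Hv Hx; simpl; auto.
 destruct Hv as [H1 Hv]. assert (s <= xi) by (apply (Hx s r); simpl; auto).
 destruct cs as [|[s' r'] cs]; simpl. split; auto.
 split. simpl in Hv. lra. change (srt (map fst ((s', r') :: cs) ++ [xi])).
 apply (IH r); auto. intros s0 r0' Hin; apply (Hx s0 r0'); simpl; auto. Qed.

Lemma srt_tags_right r0 cs xi : vcells r0 cs ->
  match cs with [] => True | (s, _) :: _ => xi <= s end -> srt (xi :: map fst cs).
Proof. revert r0 xi; induction cs as [|[s r] cs IH]; intros r0 xi Hv Hx; simpl; auto.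
 destruct Hv as [H1 Hv]. split; auto. change (srt (s :: map fst cs)). apply (IH r s); auto.
 destruct cs as [|[s' r'] cs]; auto. simpl in Hv. lra. Qed.

Lemma chn_srt xi r0 cs : vcells r0 cs -> srt (chn xi cs).
Proof. intros Hv. unfold chn. rewrite <- (splitc_app xi cs) in Hv. apply vcells_app in Hv.
 destruct Hv as [Hv1 Hv2]. apply srt_app_cons.
 eapply srt_tags_left; eauto. apply splitc_left.
 eapply srt_tags_right; eauto. apply splitc_right. Qed.

Lemma chn_in xi r0 cs a b : vcells r0 cs -> a <= r0 -> lastr r0 cs <= b -> a <= xi <= b ->
  inab a b (chn xi cs).
Proof. intros Hv Ha Hb Hxi x Hx. unfold chn in Hx. apply in_app_or in Hx.
 assert (forall s, In s (map fst cs) -> a <= s <= b).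
 { intros s Hs. apply in_map_iff in Hs. destruct Hs as [[s' r'] [E Hin]]. simpl in E; subst.
   destruct (vcells_in _ _ Hv _ _ Hin). lra. }
 rewrite <- (splitc_app xi cs) in H. destruct Hx as [Hx|[Hx|Hx]]; auto.
 apply H. rewrite map_app. apply in_or_app; auto. subst; auto.
 apply H. rewrite map_app. apply in_or_app; auto. Qed.

Lemma pts_srt r0 cs : vcells r0 cs -> srt (pts r0 cs).
Proof. unfold pts. revert r0; induction cs as [|[s r] cs IH]; intros r0 Hv; simpl; auto.
 destruct Hv as [H1 Hv]. split. lra. apply IH; auto. Qed.

Lemma pts_in r0 cs a b : vcells r0 cs -> a <= r0 -> lastr r0 cs <= b -> inab a b (pts r0 cs).
Proof. intros Hv Ha Hb x [Hx|Hx]. subst. pose proof (vcells_last _ _ Hv). lra.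
 apply in_map_iff in Hx. destruct Hx as [[s' r'] [E Hin]]. simpl in E; subst.
 destruct (vcells_in _ _ Hv _ _ Hin). lra. Qed.

Definition ptsosc (w : R -> R) r0 cs C := forall x y, In x (pts r0 cs) -> In y (pts r0 cs) -> Rabs (w x - w y) <= C.

Lemma In_lastr r0 cs : In (lastr r0 cs) (pts r0 cs).
Proof. unfold pts. revert r0; induction cs as [|[s r] cs IH]; intros r0; simpl. auto.
 right. apply IH. Qed.

Lemma pts_app_l r0 L R x : In x (pts r0 L) -> In x (pts r0 (L ++ R)).
Proof. unfold pts. intros [H|H]. left; auto. right. rewrite map_app. apply in_or_app. auto. Qed.

Lemma pts_app_r r0 L R x : In x (pts (lastr r0 L) R) -> In x (pts r0 (L ++ R)).
Proof. intros H. unfold pts in *. destruct H as [H|H].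
 subst. pose proof (In_lastr r0 L) as H0. unfold pts in H0. destruct H0 as [H0|H0].
 left; auto. right. rewrite map_app. apply in_or_app; auto.
 right. rewrite map_app. apply in_or_app; auto. Qed.

Lemma ptsosc_C0 w r0 cs C : ptsosc w r0 cs C -> 0 <= C.
Proof. intros H. specialize (H r0 r0). rewrite Rminus_diag, Rabs_R0 in H. apply H; left; auto. Qed.

Lemma Ec_right' h w xi r0 cs C : ptsosc w r0 cs C ->
  Rabs (Ec h w xi r0 cs) <= C * VarL h (xi :: map fst cs).
Proof. revert xi r0; induction cs as [|[s r] cs IH]; intros xi r0 Ho.
 pose proof (ptsosc_C0 _ _ _ _ Ho). simpl. rewrite Rabs_R0. nra.
 assert (Ec h w xi r0 ((s, r) :: cs) = (h s - h xi) * (w (lastr r cs) - w r0) + Ec h w s r cs).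
 { simpl. rewrite (Ec_anchor h w xi s r cs). ring. }
 rewrite H. simpl map. rewrite Var_cons2.
 eapply Rle_trans. apply Rabs_triang. rewrite Rabs_mult.
 assert (Rabs (w (lastr r cs) - w r0) <= C).
 { apply Ho. apply (pts_app_r r0 [(s, r)] cs). apply In_lastr. left; auto. }
 assert (Rabs (Ec h w s r cs) <= C * VarL h (s :: map fst cs)).
 { apply IH. intros x y Hx Hy. apply Ho; apply (pts_app_r r0 [(s, r)] cs); auto. }
 assert (Rabs (h s - h xi) * Rabs (w (lastr r cs) - w r0) <= Rabs (h s - h xi) * C) by
   (apply Rmult_le_compat_l; auto; apply Rabs_pos).
 rewrite Rmult_plus_distr_l. lra. Qed.

Lemma Ec_left' h w xi r0 cs C : ptsosc w r0 cs C ->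
  Rabs (Ec h w xi r0 cs) <= C * VarL h (map fst cs ++ [xi]).
Proof. revert xi r0. induction cs as [|[s r] cs IH] using rev_ind; intros xi r0 Ho.
 pose proof (ptsosc_C0 _ _ _ _ Ho). simpl. rewrite Rabs_R0. nra.
 assert (Ec h w xi r0 (cs ++ [(s, r)]) = Ec h w s r0 cs + (h s - h xi) * (w r - w r0)).
 { rewrite Ec_app. rewrite (Ec_anchor h w xi s r0 cs). simpl. ring. }
 rewrite H. rewrite map_app. simpl map. rewrite <- app_assoc. simpl.
 rewrite (Var_app h (map fst cs) s [xi]).
 change (VarL h [s; xi]) with (Rabs (h xi - h s) + VarL h [xi]). simpl (VarL h [xi]).
 eapply Rle_trans. apply Rabs_triang. rewrite Rabs_mult.
 assert (Rabs (w r - w r0) <= C).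
 { apply Ho. apply (pts_app_r r0 cs [(s, r)]). right; left; auto. left; auto. }
 assert (Rabs (Ec h w s r0 cs) <= C * VarL h (map fst cs ++ [s])).
 { apply IH. intros x y Hx Hy. apply Ho; apply pts_app_l; auto. }
 assert (Rabs (h s - h xi) * Rabs (w r - w r0) <= Rabs (h s - h xi) * C) by
   (apply Rmult_le_compat_l; auto; apply Rabs_pos).
 rewrite (Rabs_minus_sym (h xi) (h s)), Rplus_0_r, Rmult_plus_distr_l. lra. Qed.

Lemma Ec_bound_b' h w xi r0 cs C : ptsosc w r0 cs C ->
  Rabs (Ec h w xi r0 cs) <= C * VarL h (chn xi cs).
Proof. intros Ho. unfold chn. pose proof (splitc_app xi cs) as E.
 set (L := fst (splitc xi cs)) in *. set (Rr := snd (splitc xi cs)) in *.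
 rewrite <- E in Ho. rewrite <- E at 1.
 rewrite Var_app. rewrite Ec_app.
 eapply Rle_trans. apply Rabs_triang. rewrite Rmult_plus_distr_l. apply Rplus_le_compat.
 apply Ec_left'. intros x y Hx Hy; apply Ho; apply pts_app_l; auto.
 apply Ec_right'. intros x y Hx Hy; apply Ho; apply pts_app_r; auto. Qed.

Lemma oscb_ptsosc w r0 cs C : vcells r0 cs -> oscb w r0 (lastr r0 cs) C -> ptsosc w r0 cs C.
Proof. intros Hv Ho x y Hx Hy. pose proof (pts_in r0 cs r0 (lastr r0 cs) Hv ltac:(lra) ltac:(lra)).
 apply Ho; apply H; auto. Qed.

Lemma Rbar_mult_fin_fin x y : Rbar_mult (Finite x) (Finite y) = Finite (x * y).
Proof. reflexivity. Qed.

Lemma Rbar_mult_nonneg x y : Rbar_le 0 x -> Rbar_le 0 y -> Rbar_le 0 (Rbar_mult x y).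
Proof. intros Hx Hy. destruct x as [x| |]; destruct y as [y| |]; simpl in *; try contradiction.
 - apply Rmult_le_pos; auto.
 - unfold Rbar_mult, Rbar_mult'. destruct (Rle_dec 0 x); [|lra]. destruct (Rle_lt_or_eq_dec 0 x r); simpl; lra.
 - unfold Rbar_mult, Rbar_mult'. destruct (Rle_dec 0 y); [|lra]. destruct (Rle_lt_or_eq_dec 0 y r); simpl; lra.
 - simpl; auto. Qed.

Lemma Rbar_mult_pinfty_l c P : 0 <= c -> Rbar_mult p_infty (Finite c) = Finite P -> c = 0 /\ P = 0.
Proof. intros Hc H. unfold Rbar_mult, Rbar_mult' in H.
 destruct (Rle_dec 0 c); [|lra]. destruct (Rle_lt_or_eq_dec 0 c r); inversion H. subst; auto. Qed.

Lemma Rbar_mult_pos_fin c X Y : 0 < c -> Rbar_mult (Finite c) X = Finite Y -> X = Finite (Y / c).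
Proof. intros Hc H. destruct X as [x| |].
 - simpl in H. inversion H. f_equal. field. lra.
 - unfold Rbar_mult, Rbar_mult' in H. destruct (Rle_dec 0 c); [|lra].
   destruct (Rle_lt_or_eq_dec 0 c r); [inversion H|lra].
 - unfold Rbar_mult, Rbar_mult' in H. destruct (Rle_dec 0 c); [|lra].
   destruct (Rle_lt_or_eq_dec 0 c r); [inversion H|lra]. Qed.

Lemma Rbar_plus_fin x y : Rbar_le 0 x -> Rbar_le 0 y -> Rbar_lt (Rbar_plus x y) p_infty ->
  exists u v, x = Finite u /\ y = Finite v /\ Rbar_plus x y = Finite (u + v).
Proof. intros Hx Hy H. destruct x as [u| |]; destruct y as [v| |]; simpl in *; try contradiction; eauto. Qed.

Lemma Rbar_mult_mono_fin (c : R) T1 T2 P : 0 <= c -> Rbar_le 0 T1 -> Rbar_le T1 T2 ->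
  Rbar_mult (Finite c) T2 = Finite P -> exists P1, Rbar_mult (Finite c) T1 = Finite P1 /\ 0 <= P1 /\ P1 <= P.
Proof. intros Hc H0 H12 H. destruct (Req_dec c 0) as [E|Hc'].
 - subst. destruct T1 as [t1| |]; simpl in H0; try contradiction.
   + exists 0. destruct T2 as [t2| |]; simpl in H12; try contradiction.
     * simpl in H. inversion H. split; [simpl; f_equal; ring| lra].
     * apply Rbar_mult_pinfty in H; [|lra]. split; [simpl; f_equal; ring| lra].
   + destruct T2 as [t2| |]; simpl in H12; try contradiction.
     apply Rbar_mult_pinfty in H; [|lra]. exists 0. split; [|lra].
     unfold Rbar_mult, Rbar_mult'. destruct (Rle_dec 0 0); [|lra].
     destruct (Rle_lt_or_eq_dec 0 0 r); [lra|reflexivity].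
 - assert (Hcp : 0 < c) by lra. apply Rbar_mult_pos_fin in H; auto. subst T2.
   destruct T1 as [t1| |]; simpl in H0, H12; try contradiction.
   exists (c * t1). split; auto. split. apply Rmult_le_pos; lra.
   assert (c * t1 <= c * (P / c)) by (apply Rmult_le_compat_l; lra).
   replace (c * (P / c)) with P in H by (field; lra). auto. Qed.

Fixpoint psumR (F : nat -> R) (n : nat) := fsum F n.

Lemma Rbar_psum_fin (u : nat -> Rbar) (v : nat -> R) n : (forall k, u k = Finite (v k)) ->
  Rbar_psum u n = Finite (fsum v n).
Proof. intros H. induction n; simpl; auto. rewrite IHn, H. reflexivity. Qed.

Lemma psum_nonneg (u : nat -> Rbar) k : (forall k, Rbar_le 0 (u k)) -> Rbar_le 0 (Rbar_psum u k).
Proof. intros Hpos. induction k. simpl; lra.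
 change (Rbar_le 0 (Rbar_plus (Rbar_psum u k) (u k))).
 replace (Finite 0) with (Rbar_plus 0 0) by (simpl; f_equal; ring).
 apply Rbar_plus_le_compat; auto. Qed.

Lemma series_props (u : nat -> Rbar) W : (forall k, Rbar_le 0 (u k)) -> Rbar_series u = Finite W ->
  (forall k, u k = Finite (real (u k))) /\
  (forall n, fsum (fun k => real (u k)) n <= W) /\
  (forall eps, 0 < eps -> exists N, W - eps < fsum (fun k => real (u k)) N).
Proof. intros Hpos HW. unfold Rbar_series in HW.
 pose proof (Sup_seq_correct (Rbar_psum u)) as Hs. rewrite HW in Hs. simpl in Hs.
 assert (Hfin : forall k, u k = Finite (real (u k))).
 { intros k. pose proof (Hpos k) as Hk. destruct (u k) as [x| |] eqn:E; simpl in Hk |- *; auto; try contradiction.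
   exfalso. destruct (Hs (mkposreal 1 Rlt_0_1)) as [H1 _]. specialize (H1 (S k)). simpl in H1.
   rewrite E in H1.
   assert (Rbar_le 0 (Rbar_psum u k)) by (apply psum_nonneg; auto).
   destruct (Rbar_psum u k); simpl in *; auto. }
 split; auto. split.
 - intros n. destruct (Hs (mkposreal 1 Rlt_0_1)) as [_ _].
   apply Rnot_lt_le. intros Hlt. set (e := fsum (fun k => real (u k)) n - W).
   assert (He : 0 < e) by (unfold e; lra). destruct (Hs (mkposreal e He)) as [H1 _].
   specialize (H1 n). rewrite (Rbar_psum_fin u (fun k => real (u k))) in H1 by auto. simpl in H1. unfold e in H1. lra.
 - intros eps He. destruct (Hs (mkposreal eps He)) as [_ [N HN]]. exists N.
   rewrite (Rbar_psum_fin u (fun k => real (u k))) in HN by auto. simpl in HN. auto. Qed.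

Lemma pow2_ge1 k : 1 <= 2 ^ k.
Proof. induction k; simpl; lra. Qed.

Lemma tail_small (v : nat -> R) W eps N : (forall k, 0 <= v k) -> (forall n, fsum v n <= W) ->
  W - eps < fsum v N -> forall k, (N <= k)%nat -> v k <= eps.
Proof. intros Hp Hs HN k Hk. specialize (Hs (S k)). simpl in Hs.
 assert (fsum v N <= fsum v k).
 { replace k with (N + (k - N))%nat by lia. rewrite fsum_add.
   pose proof (fsum_nonneg (fun i => v (N + i)%nat) (k - N) (fun i _ => Hp _)). lra. }
 lra. Qed.

Lemma wsum_props c h a b d W : a <= b -> (forall k, Rbar_le 0 (c k)) -> wsum c h a b d = Finite W ->
  exists v : nat -> R, (forall k, Rbar_mult (c k) (TV h a b (d k)) = Finite (v k)) /\
   (forall k, 0 <= v k) /\ (forall n, fsum v n <= W) /\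
   (forall eps, 0 < eps -> exists N, forall k, (N <= k)%nat -> v k <= eps).
Proof. intros Hab Hc HW. unfold wsum in HW.
 set (T := fun k => Rbar_mult (Finite (2 ^ k)) (Rbar_mult (c k) (TV h a b (d k)))) in HW.
 assert (HT0 : forall k, Rbar_le 0 (T k)).
 { intros k. unfold T. apply Rbar_mult_nonneg. simpl. pose proof (pow2_ge1 k); lra.
   apply Rbar_mult_nonneg; auto. apply TV_ge0; auto. }
 destruct (series_props T W HT0 HW) as [Hf [Hs Ht]].
 exists (fun k => real (T k) / 2 ^ k). 
 assert (H2 : forall k, 0 < 2 ^ k) by (intros k; pose proof (pow2_ge1 k); lra).
 assert (Hin : forall k, Rbar_mult (c k) (TV h a b (d k)) = Finite (real (T k) / 2 ^ k)).
 { intros k. apply Rbar_mult_pos_fin; auto. rewrite <- Hf. reflexivity. }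
 assert (Hnn : forall k, 0 <= real (T k) / 2 ^ k).
 { intros k. specialize (HT0 k). rewrite Hf in HT0. simpl in HT0. apply Rdiv_le_0_compat; auto. }
 assert (Hle : forall k, real (T k) / 2 ^ k <= real (T k)).
 { intros k. pose proof (pow2_ge1 k). specialize (Hnn k).
   replace (real (T k)) with ((real (T k) / 2 ^ k) * 2 ^ k) at 2 by (field; lra). nra. }
 split; auto. split; auto. split.
 - intros n. eapply Rle_trans; [apply fsum_le; intros; apply Hle| apply Hs].
 - intros eps He. destruct (Ht eps He) as [N HN]. exists N. intros k Hk.
   eapply Rle_trans; [apply Hle|]. apply (tail_small (fun k => real (T k)) W eps N); auto.
   intros k0; specialize (HT0 k0); rewrite Hf in HT0; simpl in HT0; auto. Qed.

Lemma fm_zero_r f : forall x, fm f (fun _ => 0) x = f x.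
Proof. intros; unfold fm; ring. Qed.

Lemma Ec_fm4 A B C D xi r0 cs :
  Ec (fm A B) (fm C D) xi r0 cs = Ec A C xi r0 cs - Ec A D xi r0 cs - Ec B C xi r0 cs + Ec B D xi r0 cs.
Proof. rewrite Ec_lin1, !Ec_lin2. ring. Qed.

Lemma Ec_fm_zero f g xi r0 cs : Ec (fm f (fun _ => 0)) (fm g (fun _ => 0)) xi r0 cs = Ec f g xi r0 cs.
Proof. rewrite Ec_fm4, Ec_c1, Ec_c2, Ec_c1. ring. Qed.

Definition T1 f g (Psi U : nat -> R -> R) xi r0 cs k :=
  Ec (fm f (Psi k)) (fm (U (S k)) (U k)) xi r0 cs + Ec (fm (Psi (S k)) (Psi k)) (fm g (U (S k))) xi r0 cs.

Lemma tel1 f g Psi U xi r0 cs m n :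
  Ec (fm f (Psi m)) (fm g (U m)) xi r0 cs =
  fsum (fun j => T1 f g Psi U xi r0 cs (m + j)) n + Ec (fm f (Psi (m + n)%nat)) (fm g (U (m + n)%nat)) xi r0 cs.
Proof. induction n. simpl. rewrite Nat.add_0_r. ring.
 simpl. rewrite IHn. unfold T1. rewrite Nat.add_succ_r. rewrite !Ec_fm4. ring. Qed.

Definition T2 f g (Psi U : nat -> R -> R) xi r0 cs k :=
  Ec (fm (Psi (S k)) (Psi k)) (fm g (U k)) xi r0 cs + Ec (fm f (Psi (S k))) (fm (U (S k)) (U k)) xi r0 cs.

Lemma tel2 f g Psi U xi r0 cs m n :
  Ec (fm f (Psi m)) (fm g (U m)) xi r0 cs =
  fsum (fun j => T2 f g Psi U xi r0 cs (m + j)) n + Ec (fm f (Psi (m + n)%nat)) (fm g (U (m + n)%nat)) xi r0 cs.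
Proof. induction n. simpl. rewrite Nat.add_0_r. ring.
 simpl. rewrite IHn. unfold T2. rewrite Nat.add_succ_r. rewrite !Ec_fm4. ring. Qed.

Lemma VarL_const c l : VarL (fun _ => c) l = 0.
Proof. induction l as [|x l IH]. auto. destruct l. auto. rewrite Var_cons2, IH, Rminus_diag, Rabs_R0. ring. Qed.

Lemma VarL_fm h1 h2 l : VarL (fm h1 h2) l <= VarL h1 l + VarL h2 l.
Proof. apply Var_minus. Qed.

Definition maxl (l : list R) := fold_right Rmax 0 l.

Lemma maxl_ge x l : In x l -> x <= maxl l.
Proof. induction l as [|y l IH]; simpl. tauto. intros [E|H]. subst. apply Rmax_l.
 eapply Rle_trans. apply IH; auto. apply Rmax_r. Qed.

Lemma maxl_le l M : 0 <= M -> (forall x, In x l -> x <= M) -> maxl l <= M.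
Proof. induction l as [|y l IH]; simpl; intros H0 H. auto. apply Rmax_lub. apply H; auto. apply IH; auto. Qed.

Lemma maxl_nonneg l : 0 <= maxl l.
Proof. induction l; simpl. lra. eapply Rle_trans. apply IHl. apply Rmax_r. Qed.

Lemma sup_dev_ge h a b c t : a <= t <= b -> Rbar_le (Rabs (h t - h c)) (sup_dev h a b c).
Proof. intros Ht. unfold sup_dev. destruct (Lub_Rbar_correct (fun s => exists t, a <= t <= b /\ s = Rabs (h t - h c))) as [H _].
 apply H. eauto. Qed.

Lemma sup_dev_nonneg h a b c : a <= b -> Rbar_le 0 (sup_dev h a b c).
Proof. intros Hab. eapply Rbar_le_trans; [|apply (sup_dev_ge h a b c a)]. simpl; apply Rabs_pos. lra. Qed.

Lemma shift_nonneg xm1 x k : Rbar_le 0 xm1 -> (forall k, 0 <= x k) -> Rbar_le 0 (shift_seq xm1 x k).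
Proof. intros H1 H2. destruct k; simpl; auto. Qed.

Lemma lim_small x : nonincr_to_zero x -> forall eps, 0 < eps -> exists N, forall n, (N <= n)%nat -> x n <= eps.
Proof. intros [H0 [H1 H2]] eps He. apply is_lim_seq_spec in H2. destruct (H2 (mkposreal eps He)) as [N HN].
 exists N. intros n Hn. specialize (HN n Hn). simpl in HN. rewrite Rminus_0_r in HN.
 apply Rabs_def2 in HN. lra. Qed.

Lemma nonincr_le0 x k : nonincr_to_zero x -> x k <= x O.
Proof. intros [H0 [H1 H2]]. induction k. lra. specialize (H1 k). lra. Qed.

Lemma nonincr_mono x k j : nonincr_to_zero x -> (k <= j)%nat -> x j <= x k.
Proof. intros [H0 [H1 H2]] Hkj. induction Hkj. lra. specialize (H1 m). lra. Qed.

Lemma fsum_prev (d : nat -> R) n : (forall k, 0 <= d k) ->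
  fsum (fun k => match k with O => 0 | S k' => d k' end) n <= fsum d n.
Proof. intros Hd. destruct n. simpl; lra.
 rewrite fsum_shift. change (fsum d (S n)) with (fsum d n + d n).
 change (fun i : nat => match S i with O => 0 | S k' => d k' end) with d.
 change (match O with O => 0 | S k' => d k' end) with 0. replace (fsum (fun i : nat => d i) n) with (fsum d n) by reflexivity. specialize (Hd n). lra. Qed.

Lemma fsum_const c n : fsum (fun _ => c) n = INR n * c.
Proof. induction n as [|n IH]. simpl; lra. simpl fsum. rewrite IH, S_INR. lra. Qed.

Definition shiftf (psi : nat -> R -> R) (k : nat) : R -> R :=
  match k with O => fun _ => 0 | S k' => psi k' end.

Definition apx (h : R -> R) a b d eps (u : R -> R) :=
  (forall t, a <= t <= b -> Rabs (h t - u t) <= d / 2) /\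
  forall c P, 0 <= c -> Rbar_mult (Finite c) (TV h a b d) = Finite P ->
  forall l, srt l -> inab a b l -> c * VarL u l <= P + c * eps.

Lemma apx_seq h a b (d : nat -> R) eps : a <= b -> (forall k, 0 <= d k) -> 0 < eps ->
  exists psi : nat -> R -> R, forall k, apx h a b (d k) eps (psi k).
Proof. intros Hab Hd He. apply (choice (fun k u => apx h a b (d k) eps u)).
 intros k. destruct (approx h a b (d k) eps Hab (Hd k) He) as [u Hu]. exists u. exact Hu. Qed.

Lemma apx_osc h a b d eps u : apx h a b d eps u -> oscb (fm h u) a b d.
Proof. intros [H _] x y Hx Hy. unfold fm. pose proof (H x Hx). pose proof (H y Hy).
 replace (h x - u x - (h y - u y)) with ((h x - u x) + - (h y - u y)) by ring.
 eapply Rle_trans. apply Rabs_triang. rewrite Rabs_Ropp. lra. Qed.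

Lemma apx_diff h a b d eps u x y : apx h a b d eps u -> a <= x <= b -> a <= y <= b ->
  Rabs (fm h u x - fm h u y) <= d.
Proof. intros H Hx Hy. apply (apx_osc h a b d eps u H); auto. Qed.

Lemma oscb_mono w a b x0 x1 C : a <= x0 -> x1 <= b -> oscb w a b C -> oscb w x0 x1 C.
Proof. intros. eapply oscb_sub; eauto. Qed.

Lemma main_S a b f g xi eta theta cs W1 W2 :
  a < b -> nonincr_to_zero eta -> nonincr_to_zero theta -> a <= xi <= b ->
  vcells a cs -> lastr a cs = b ->
  wsum (shift_seq (sup_dev f a b a) eta) g a b theta = Finite W1 ->
  wsum (fun k => Finite (theta k)) f a b eta = Finite W2 ->
  Rabs (Ec f g xi a cs) <= 2 * (W1 + W2).
Proof.
 intros Hab Heta Hth Hxi Hv Hl HW1 HW2.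
 pose proof Heta as [Hen [Hed Hel]]. pose proof Hth as [Htn [Htd Htl]].
 set (em1 := sup_dev f a b a) in *.
 assert (Hem1 : Rbar_le 0 em1) by (apply sup_dev_nonneg; lra).
 destruct (wsum_props (shift_seq em1 eta) g a b theta W1 (Rlt_le _ _ Hab)
   (fun k => shift_nonneg em1 eta k Hem1 Hen) HW1) as [e [He [He0 [HeS HeT]]]].
 destruct (wsum_props (fun k => Finite (theta k)) f a b eta W2 (Rlt_le _ _ Hab)
   (fun k => Htn k) HW2) as [d [Hd [Hd0 [HdS HdT]]]].
 apply le_epsilon. intros eps Heps.
 set (V := VarL f (chn xi cs)).
 assert (HV : 0 <= V) by apply Var_nonneg.
 destruct (lim_small theta Hth (eps / (4 * (V + 1)))) as [N1 HN1].
 { apply Rdiv_lt_0_compat; lra. }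
 destruct (HdT (eps / 4)) as [N2 HN2]. lra.
 set (M := Nat.max N1 N2). set (N := S M).
 set (C0 := maxl (map (fun s => Rabs (f s - f xi)) (map fst cs))).
 assert (HC0 : 0 <= C0) by apply maxl_nonneg.
 set (K := C0 + Rabs (real em1) + eta O + theta O + 1).
 assert (HK : 1 <= K). { unfold K. pose proof (Rabs_pos (real em1)). pose proof (Hen O). pose proof (Htn O). lra. }
 set (eps1 := eps / (16 * K * (INR N + 1))).
 assert (Heps1 : 0 < eps1). { unfold eps1. apply Rdiv_lt_0_compat. lra. pose proof (pos_INR N). nra. }
 destruct (apx_seq f a b eta eps1) as [psi Hpsi]; try lra; auto.
 destruct (apx_seq g a b theta eps1) as [u Hu]; try lra; auto.
 set (Psi := shiftf psi). set (U := shiftf u).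
 assert (Hpts : srt (pts a cs) /\ inab a b (pts a cs)).
 { split. apply pts_srt; auto. apply pts_in; auto; lra. }
 assert (Hch : srt (chn xi cs) /\ inab a b (chn xi cs)).
 { split. eapply chn_srt; eauto. apply chn_in with a; auto; lra. }
 destruct Hpts as [Hp1 Hp2]. destruct Hch as [Hc1 Hc2].
 assert (Hosc : forall k, oscb (fm g (u k)) a (lastr a cs) (theta k)).
 { intros k. rewrite Hl. eapply apx_osc. apply Hu. }
 assert (Hvn : forall h l, 0 <= VarL h l) by (intros; apply Var_nonneg).
 assert (Hek : forall k, eta k <= K).
 { intros k. pose proof (nonincr_le0 eta k Heta). unfold K. pose proof (Rabs_pos (real em1)). pose proof (Htn O). lra. }
 assert (Htk : forall k, theta k <= K).
 { intros k. pose proof (nonincr_le0 theta k Hth). unfold K. pose proof (Rabs_pos (real em1)). pose proof (Hen O). lra. }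
 assert (HB : forall k, Rabs (Ec (fm (Psi (S k)) (Psi k)) (fm g (U (S k))) xi a cs) <=
            d k + match k with O => 0 | S k' => d k' end + 2 * K * eps1).
 { intros k. eapply Rle_trans. apply Ec_bound_b; auto. apply Hosc.
   eapply Rle_trans. apply Rmult_le_compat_l. apply Htn. apply VarL_fm.
   rewrite Rmult_plus_distr_l.
   assert (H1 : theta k * VarL (psi k) (chn xi cs) <= d k + theta k * eps1).
   { apply (proj2 (Hpsi k)); auto. }
   destruct k as [|k'].
   - simpl Psi. simpl. rewrite VarL_const. pose proof (Htk O). nra.
   - simpl Psi. simpl.
     assert (H2 : theta k' * VarL (psi k') (chn xi cs) <= d k' + theta k' * eps1).
     { apply (proj2 (Hpsi k')); auto. }
     assert (theta (S k') * VarL (psi k') (chn xi cs) <= theta k' * VarL (psi k') (chn xi cs)).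
     { apply Rmult_le_compat_r; auto. }
     pose proof (Htk (S k')). pose proof (Htk k'). pose proof (Htn (S k')). pose proof (Htn k'). nra. }
 assert (HA : forall k, Rabs (Ec (fm f (Psi k)) (fm (U (S k)) (U k)) xi a cs) <= 2 * e k + 2 * K * eps1).
 { intros k. destruct k as [|k'].
   - simpl Psi. simpl U.
     eapply Rle_trans. apply (Ec_bound_a _ _ _ _ _ C0); auto.
     { intros s r Hin. unfold fm. rewrite !Rminus_0_r. apply maxl_ge. apply (in_map (fun s => Rabs (f s - f xi))).
       apply in_map_iff. exists (s, r). auto. }
     eapply Rle_trans. apply Rmult_le_compat_l; auto. apply VarL_fm. rewrite VarL_const, Rplus_0_r.
     specialize (He O). simpl in He. destruct em1 as [E| |] eqn:Eem; simpl in Hem1; try contradiction.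
     + assert (HC0E : C0 <= 2 * E).
       { apply maxl_le. lra. intros x Hx. apply in_map_iff in Hx. destruct Hx as [s [Es Hs]]. subst x.
         apply in_map_iff in Hs. destruct Hs as [[s' r'] [Es' Hin]]. simpl in Es'. subst s'.
         destruct (vcells_in _ _ Hv _ _ Hin) as [Hs1 Hs2]. rewrite Hl in Hs2.
         pose proof (sup_dev_ge f a b a s ltac:(lra)). pose proof (sup_dev_ge f a b a xi Hxi).
         fold em1 in H, H0. rewrite Eem in H, H0. simpl in H, H0.
         replace (f s - f xi) with ((f s - f a) + - (f xi - f a)) by ring.
         eapply Rle_trans. apply Rabs_triang. rewrite Rabs_Ropp. lra. }
       assert (H1 : E * VarL (u O) (pts a cs) <= e O + E * eps1).
       { apply (proj2 (Hu O)); auto. }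
       assert (Habs : E <= K). { unfold K. simpl. rewrite Rabs_right by lra. pose proof (Hen O). pose proof (Htn O). lra. }
       pose proof (Hvn (u O) (pts a cs)).
       assert (C0 * VarL (u O) (pts a cs) <= 2 * E * VarL (u O) (pts a cs)) by (apply Rmult_le_compat_r; auto).
       nra.
     + destruct (TV g a b (theta O)) as [t| |] eqn:ET.
       * apply Rbar_mult_pinfty_l in He. destruct He as [Ht0 He0']. subst t.
         assert (H1 : C0 * VarL (u O) (pts a cs) <= 0 + C0 * eps1).
         { apply (proj2 (Hu O)); auto. rewrite ET. simpl. f_equal. ring. }
         assert (C0 <= K). { unfold K. pose proof (Rabs_pos (real p_infty)). pose proof (Hen O). pose proof (Htn O). lra. }
         rewrite He0'. nra.
         pose proof (TV_ge0 g a b (theta O) ltac:(lra)). rewrite ET in H. simpl in H. auto.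
       * simpl in He. discriminate.
       * pose proof (TV_ge0 g a b (theta O) ltac:(lra)). rewrite ET in H. simpl in H. contradiction.
   - simpl Psi. simpl U.
     eapply Rle_trans. apply (Ec_bound_a _ _ _ _ _ (eta k')); auto.
     { intros s r Hin. destruct (vcells_in _ _ Hv _ _ Hin) as [Hs1 Hs2]. rewrite Hl in Hs2.
       eapply apx_diff. apply Hpsi. lra. lra. }
     eapply Rle_trans. apply Rmult_le_compat_l; auto. apply VarL_fm. rewrite Rmult_plus_distr_l.
     assert (H1 : eta k' * VarL (u (S k')) (pts a cs) <= e (S k') + eta k' * eps1).
     { apply (proj2 (Hu (S k'))); auto. rewrite <- (He (S k')). reflexivity. }
     destruct (Rbar_mult_mono_fin (eta k') (TV g a b (theta k')) (TV g a b (theta (S k'))) (e (S k')))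
       as [P1 [HP1 [HP10 HP11]]]; auto.
     apply TV_ge0; lra. apply TV_mono. apply Htd. rewrite <- (He (S k')). reflexivity.
     assert (H2 : eta k' * VarL (u k') (pts a cs) <= P1 + eta k' * eps1).
     { apply (proj2 (Hu k')); auto. }
     pose proof (Hek k'). pose proof (Hen k'). nra. }
 assert (HR : Rabs (Ec (fm f (Psi N)) (fm g (U N)) xi a cs) <= eps / 4 + d M + K * eps1).
 { unfold N. simpl Psi. simpl U.
   eapply Rle_trans. apply (Ec_bound_b _ _ _ _ _ (theta M)); [exact Hv | apply Hosc].
   eapply Rle_trans. apply Rmult_le_compat_l. apply Htn. apply VarL_fm.
   rewrite Rmult_plus_distr_l. fold V.
   assert (H1 : theta M * VarL (psi M) (chn xi cs) <= d M + theta M * eps1).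
   { apply (proj2 (Hpsi M)); auto. }
   assert (H2 : theta M <= eps / (4 * (V + 1))) by (apply HN1; unfold M; lia).
   assert (theta M * V <= eps / 4).
   { apply Rle_trans with (eps / (4 * (V + 1)) * V). apply Rmult_le_compat_r; auto.
     unfold Rdiv. rewrite Rinv_mult. 
     assert (/ (V + 1) * V <= 1).
     { apply Rmult_le_reg_l with (V + 1). lra. rewrite <- Rmult_assoc, Rinv_r by lra. lra. }
     assert (0 <= eps * / 4) by lra. nra. }
   pose proof (Htk M). pose proof (Htn M). nra. }
 assert (E0 : Ec f g xi a cs = Ec (fm f (Psi O)) (fm g (U O)) xi a cs) by (symmetry; apply Ec_fm_zero).
 rewrite E0.
 rewrite (tel1 f g Psi U xi a cs O N). simpl (O + N)%nat.
 eapply Rle_trans. apply Rabs_triang.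
 eapply Rle_trans. apply Rplus_le_compat_r. apply fsum_abs.
 assert (Hsum : fsum (fun i => Rabs (T1 f g Psi U xi a cs (O + i))) N <=
   fsum (fun k => 2 * e k + (d k + match k with O => 0 | S k' => d k' end) + 4 * K * eps1) N).
 { apply fsum_le. intros k _. simpl (O + k)%nat. unfold T1.
   eapply Rle_trans. apply Rabs_triang. specialize (HA k). specialize (HB k). lra. }
 rewrite !fsum_plus in Hsum. rewrite fsum_scal in Hsum.
 assert (fsum (fun _ => 4 * K * eps1) N = INR N * (4 * K * eps1)).
 { apply fsum_const. }
 rewrite H in Hsum.
 pose proof (HeS N). pose proof (HdS N).
 pose proof (fsum_prev d N Hd0).
 assert (HdM : d M <= eps / 4) by (apply HN2; unfold M; lia).
 assert (INR N * (4 * K * eps1) + K * eps1 <= eps / 4).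
 { unfold eps1. pose proof (pos_INR N).
   replace (INR N * (4 * K * (eps / (16 * K * (INR N + 1)))) + K * (eps / (16 * K * (INR N + 1))))
     with (eps / 16 * ((4 * INR N + 1) / (INR N + 1))) by (field; lra).
   assert ((4 * INR N + 1) / (INR N + 1) <= 4).
   { apply Rmult_le_reg_r with (INR N + 1). lra. unfold Rdiv. rewrite Rmult_assoc, Rinv_l by lra. lra. }
   nra. }
 lra.
Qed.

Lemma main_St a b f g xi eta theta cs W1 W2 :
  a < b -> nonincr_to_zero eta -> nonincr_to_zero theta -> a <= xi <= b ->
  vcells a cs -> lastr a cs = b ->
  wsum (shift_seq (sup_dev g a b b) theta) f a b eta = Finite W1 ->
  wsum (fun k => Finite (eta k)) g a b theta = Finite W2 ->
  Rabs (Ec f g xi a cs) <= 2 * (W1 + W2).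
Proof.
 intros Hab Heta Hth Hxi Hv Hl HW1 HW2.
 pose proof Heta as [Hen [Hed Hel]]. pose proof Hth as [Htn [Htd Htl]].
 set (em1 := sup_dev g a b b) in *.
 assert (Hem1 : Rbar_le 0 em1) by (apply sup_dev_nonneg; lra).
 destruct (wsum_props (shift_seq em1 theta) f a b eta W1 (Rlt_le _ _ Hab)
   (fun k => shift_nonneg em1 theta k Hem1 Htn) HW1) as [e [He [He0 [HeS HeT]]]].
 destruct (wsum_props (fun k => Finite (eta k)) g a b theta W2 (Rlt_le _ _ Hab)
   (fun k => Hen k) HW2) as [d [Hd [Hd0 [HdS HdT]]]].
 apply le_epsilon. intros eps Heps.
 set (V := VarL g (pts a cs)).
 assert (HV : 0 <= V) by apply Var_nonneg.
 destruct (lim_small eta Heta (eps / (4 * (V + 1)))) as [N1 HN1].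
 { apply Rdiv_lt_0_compat; lra. }
 destruct (HdT (eps / 4)) as [N2 HN2]. lra.
 set (M := Nat.max N1 N2). set (N := S M).
 set (C0 := 2 * maxl (map (fun x => Rabs (g x - g b)) (pts a cs))).
 assert (HC0 : 0 <= C0) by (pose proof (maxl_nonneg (map (fun x => Rabs (g x - g b)) (pts a cs))); unfold C0; lra).
 set (K := C0 + Rabs (real em1) + eta O + theta O + 1).
 assert (HK : 1 <= K). { unfold K. pose proof (Rabs_pos (real em1)). pose proof (Hen O). pose proof (Htn O). lra. }
 set (eps1 := eps / (16 * K * (INR N + 1))).
 assert (Heps1 : 0 < eps1). { unfold eps1. apply Rdiv_lt_0_compat. lra. pose proof (pos_INR N). nra. }
 destruct (apx_seq f a b eta eps1) as [psi Hpsi]; try lra; auto.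
 destruct (apx_seq g a b theta eps1) as [u Hu]; try lra; auto.
 set (Psi := shiftf psi). set (U := shiftf u).
 assert (Hpts : srt (pts a cs) /\ inab a b (pts a cs)).
 { split. apply pts_srt; auto. apply pts_in; auto; lra. }
 assert (Hch : srt (chn xi cs) /\ inab a b (chn xi cs)).
 { split. eapply chn_srt; eauto. apply chn_in with a; auto; lra. }
 destruct Hpts as [Hp1 Hp2]. destruct Hch as [Hc1 Hc2].
 assert (Hosc : forall k, oscb (fm g (u k)) a (lastr a cs) (theta k)).
 { intros k. rewrite Hl. eapply apx_osc. apply Hu. }
 assert (Hvn : forall h l, 0 <= VarL h l) by (intros; apply Var_nonneg).
 assert (Hek : forall k, eta k <= K).
 { intros k. pose proof (nonincr_le0 eta k Heta). unfold K. pose proof (Rabs_pos (real em1)). pose proof (Htn O). lra. }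
 assert (Htk : forall k, theta k <= K).
 { intros k. pose proof (nonincr_le0 theta k Hth). unfold K. pose proof (Rabs_pos (real em1)). pose proof (Hen O). lra. }
 assert (HA : forall k, Rabs (Ec (fm f (Psi (S k))) (fm (U (S k)) (U k)) xi a cs) <=
            d k + match k with O => 0 | S k' => d k' end + 2 * K * eps1).
 { intros k. eapply Rle_trans. apply (Ec_bound_a _ _ _ _ _ (eta k)); auto.
   { intros s r Hin. destruct (vcells_in _ _ Hv _ _ Hin) as [Hs1 Hs2]. rewrite Hl in Hs2.
     eapply apx_diff. apply Hpsi. lra. lra. }
   eapply Rle_trans. apply Rmult_le_compat_l. apply Hen. apply VarL_fm.
   rewrite Rmult_plus_distr_l.
   assert (H1 : eta k * VarL (u k) (pts a cs) <= d k + eta k * eps1).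
   { apply (proj2 (Hu k)); auto. }
   destruct k as [|k'].
   - unfold U, shiftf. rewrite VarL_const. pose proof (Hek O). nra.
   - unfold U, shiftf.
     assert (H2 : eta k' * VarL (u k') (pts a cs) <= d k' + eta k' * eps1).
     { apply (proj2 (Hu k')); auto. }
     assert (eta (S k') * VarL (u k') (pts a cs) <= eta k' * VarL (u k') (pts a cs)).
     { apply Rmult_le_compat_r; auto. }
     pose proof (Hek (S k')). pose proof (Hek k'). pose proof (Hen (S k')). pose proof (Hen k'). nra. }
 assert (HB : forall k, Rabs (Ec (fm (Psi (S k)) (Psi k)) (fm g (U k)) xi a cs) <= 2 * e k + 2 * K * eps1).
 { intros k. destruct k as [|k'].
   - unfold Psi, U, shiftf.
     eapply Rle_trans. apply (Ec_bound_b' _ _ _ _ _ C0).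
     { intros x y Hx Hy. unfold fm. rewrite !Rminus_0_r.
       replace (g x - g y) with ((g x - g b) + - (g y - g b)) by ring.
       eapply Rle_trans. apply Rabs_triang. rewrite Rabs_Ropp. unfold C0.
       pose proof (maxl_ge _ _ (in_map (fun x => Rabs (g x - g b)) _ _ Hx)).
       pose proof (maxl_ge _ _ (in_map (fun x => Rabs (g x - g b)) _ _ Hy)). lra. }
     eapply Rle_trans. apply Rmult_le_compat_l; auto. apply VarL_fm. rewrite VarL_const, Rplus_0_r.
     specialize (He O). simpl in He. destruct em1 as [E| |] eqn:Eem; simpl in Hem1; try contradiction.
     + assert (HC0E : C0 <= 2 * E).
       { unfold C0. apply Rmult_le_compat_l. lra. apply maxl_le. lra. intros x Hx. apply in_map_iff in Hx.
         destruct Hx as [s [Es Hs]]. subst x. apply Hp2 in Hs.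
         pose proof (sup_dev_ge g a b b s Hs). fold em1 in H. rewrite Eem in H. simpl in H. auto. }
       assert (H1 : E * VarL (psi O) (chn xi cs) <= e O + E * eps1).
       { apply (proj2 (Hpsi O)); auto. }
       assert (Habs : E <= K). { unfold K. simpl. rewrite Rabs_right by lra. pose proof (Hen O). pose proof (Htn O). lra. }
       pose proof (Hvn (psi O) (chn xi cs)).
       assert (C0 * VarL (psi O) (chn xi cs) <= 2 * E * VarL (psi O) (chn xi cs)) by (apply Rmult_le_compat_r; auto).
       nra.
     + destruct (TV f a b (eta O)) as [t| |] eqn:ET.
       * apply Rbar_mult_pinfty_l in He. destruct He as [Ht0 He0']. subst t.
         assert (H1 : C0 * VarL (psi O) (chn xi cs) <= 0 + C0 * eps1).
         { apply (proj2 (Hpsi O)); auto. rewrite ET. simpl. f_equal. ring. }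
         assert (C0 <= K). { unfold K. pose proof (Rabs_pos (real p_infty)). pose proof (Hen O). pose proof (Htn O). lra. }
         rewrite He0'. nra.
         pose proof (TV_ge0 f a b (eta O) ltac:(lra)). rewrite ET in H. simpl in H. auto.
       * simpl in He. discriminate.
       * pose proof (TV_ge0 f a b (eta O) ltac:(lra)). rewrite ET in H. simpl in H. contradiction.
   - unfold Psi, U, shiftf.
     eapply Rle_trans. apply (Ec_bound_b _ _ _ _ _ (theta k')); [exact Hv| apply Hosc].
     eapply Rle_trans. apply Rmult_le_compat_l. apply Htn. apply VarL_fm. rewrite Rmult_plus_distr_l.
     assert (H1 : theta k' * VarL (psi (S k')) (chn xi cs) <= e (S k') + theta k' * eps1).
     { apply (proj2 (Hpsi (S k'))); auto. rewrite <- (He (S k')). reflexivity. }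
     destruct (Rbar_mult_mono_fin (theta k') (TV f a b (eta k')) (TV f a b (eta (S k'))) (e (S k')))
       as [P1 [HP1 [HP10 HP11]]]; auto.
     apply TV_ge0; lra. apply TV_mono. apply Hed. rewrite <- (He (S k')). reflexivity.
     assert (H2 : theta k' * VarL (psi k') (chn xi cs) <= P1 + theta k' * eps1).
     { apply (proj2 (Hpsi k')); auto. }
     pose proof (Htk k'). pose proof (Htn k'). nra. }
 assert (HR : Rabs (Ec (fm f (Psi N)) (fm g (U N)) xi a cs) <= eps / 4 + d M + K * eps1).
 { unfold N. unfold Psi, U, shiftf.
   eapply Rle_trans. apply (Ec_bound_a _ _ _ _ _ (eta M)); auto.
   { intros s r Hin. destruct (vcells_in _ _ Hv _ _ Hin) as [Hs1 Hs2]. rewrite Hl in Hs2.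
     eapply apx_diff. apply Hpsi. lra. lra. }
   eapply Rle_trans. apply Rmult_le_compat_l. apply Hen. apply VarL_fm.
   rewrite Rmult_plus_distr_l. fold V.
   assert (H1 : eta M * VarL (u M) (pts a cs) <= d M + eta M * eps1).
   { apply (proj2 (Hu M)); auto. }
   assert (H2 : eta M <= eps / (4 * (V + 1))) by (apply HN1; unfold M; lia).
   assert (eta M * V <= eps / 4).
   { apply Rle_trans with (eps / (4 * (V + 1)) * V). apply Rmult_le_compat_r; auto.
     unfold Rdiv. rewrite Rinv_mult.
     assert (/ (V + 1) * V <= 1).
     { apply Rmult_le_reg_l with (V + 1). lra. rewrite <- Rmult_assoc, Rinv_r by lra. lra. }
     assert (0 <= eps * / 4) by lra. nra. }
   pose proof (Hek M). pose proof (Hen M). nra. }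
 assert (E0 : Ec f g xi a cs = Ec (fm f (Psi O)) (fm g (U O)) xi a cs) by (symmetry; apply Ec_fm_zero).
 rewrite E0.
 rewrite (tel2 f g Psi U xi a cs O N). simpl (O + N)%nat.
 eapply Rle_trans. apply Rabs_triang.
 eapply Rle_trans. apply Rplus_le_compat_r. apply fsum_abs.
 assert (Hsum : fsum (fun i => Rabs (T2 f g Psi U xi a cs (O + i))) N <=
   fsum (fun k => 2 * e k + (d k + match k with O => 0 | S k' => d k' end) + 4 * K * eps1) N).
 { apply fsum_le. intros k _. simpl (O + k)%nat. unfold T2.
   eapply Rle_trans. apply Rabs_triang. specialize (HA k). specialize (HB k). lra. }
 rewrite !fsum_plus in Hsum. rewrite fsum_scal in Hsum.
 rewrite fsum_const in Hsum.
 pose proof (HeS N). pose proof (HdS N).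
 pose proof (fsum_prev d N Hd0).
 assert (HdM : d M <= eps / 4) by (apply HN2; unfold M; lia).
 assert (INR N * (4 * K * eps1) + K * eps1 <= eps / 4).
 { unfold eps1. pose proof (pos_INR N).
   replace (INR N * (4 * K * (eps / (16 * K * (INR N + 1)))) + K * (eps / (16 * K * (INR N + 1))))
     with (eps / 16 * ((4 * INR N + 1) / (INR N + 1))) by (field; lra).
   assert ((4 * INR N + 1) / (INR N + 1) <= 4).
   { apply Rmult_le_reg_r with (INR N + 1). lra. unfold Rdiv. rewrite Rmult_assoc, Rinv_l by lra. lra. }
   nra. }
 lra.
Qed.

Fixpoint flat (F : nat -> list R) (n : nat) : list R :=
  match n with O => [] | S n' => flat F n' ++ F n' end.

Lemma flat_var h F n : fsum (fun i => VarL h (F i)) n <= VarL h (flat F n).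
Proof. induction n; simpl. lra. pose proof (Var_app_ge h (flat F n) (F n)). lra. Qed.

Lemma srt_app l1 l2 : srt l1 -> srt l2 -> (forall x y, In x l1 -> In y l2 -> x <= y) -> srt (l1 ++ l2).
Proof. induction l1 as [|x l1 IH]. simpl; auto. intros H1 H2 H. destruct l1 as [|z l1].
 - destruct l2 as [|y l2]. simpl; auto. simpl. split; [apply H; simpl; auto | exact H2].
 - destruct H1 as [Hxz H1]. change (srt (x :: z :: (l1 ++ l2))). split; auto.
   apply IH; auto. intros x0 y0 Hx0 Hy0; apply H; simpl in *; tauto. Qed.

Definition partP (a b : R) (l : nat) (p : nat -> R) :=
  p O = a /\ p l = b /\ (forall i, (i < l)%nat -> p i <= p (S i)).

Lemma partP_mono a b l p i j : partP a b l p -> (i <= j <= l)%nat -> p i <= p j.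
Proof. intros [H0 [H1 H2]] Hij. destruct Hij as [Hij Hjl]. induction Hij. lra.
 specialize (H2 m ltac:(lia)). specialize (IHHij ltac:(lia)). lra. Qed.

Lemma partP_in a b l p i : partP a b l p -> (i <= l)%nat -> a <= p i <= b.
Proof. intros H Hi. pose proof (partP_mono a b l p 0 i H ltac:(lia)).
 pose proof (partP_mono a b l p i l H ltac:(lia)). destruct H as [Ha [Hb _]]. rewrite Ha in *. rewrite Hb in *. lra. Qed.

Lemma flat_props a b l p F : partP a b l p ->
  (forall i, (i < l)%nat -> srt (F i) /\ inab (p i) (p (S i)) (F i)) ->
  srt (flat F l) /\ inab a b (flat F l).
Proof. intros Hp HF.
 assert (forall n, (n <= l)%nat -> srt (flat F n) /\ inab a (p n) (flat F n)).
 { induction n; intros Hn; simpl. split; auto. intros x [].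
   destruct (IHn ltac:(lia)) as [H1 H2]. destruct (HF n ltac:(lia)) as [H3 H4].
   split. apply srt_app; auto. intros x y Hx Hy. apply H2 in Hx. apply H4 in Hy. lra.
   intros x Hx. apply in_app_or in Hx. destruct Hx as [Hx|Hx].
   apply H2 in Hx. pose proof (partP_mono a b l p n (S n) Hp ltac:(lia)). lra.
   apply H4 in Hx. pose proof (partP_in a b l p n Hp ltac:(lia)). lra. }
 destruct (H l ltac:(lia)) as [H1 H2]. split; auto. intros x Hx. apply H2 in Hx.
 destruct Hp as [_ [Hb _]]. rewrite Hb in Hx. auto. Qed.

Definition famP (a b : R) (l : nat) (p xi : nat -> R) (cs : nat -> list (R * R)) :=
  partP a b l p /\ forall i, (i < l)%nat ->
    vcells (p i) (cs i) /\ lastr (p i) (cs i) = p (S i) /\ p i <= xi i <= p (S i).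

Definition compactP (f g : R -> R) a b eps0 rho :=
  forall al be, a <= al -> al <= be -> be <= b -> be - al < rho -> oscb f al be eps0 \/ oscb g al be eps0.

Lemma fam_lists a b l p xi cs : famP a b l p xi cs ->
  (srt (flat (fun i => pts (p i) (cs i)) l) /\ inab a b (flat (fun i => pts (p i) (cs i)) l)) /\
  (srt (flat (fun i => chn (xi i) (cs i)) l) /\ inab a b (flat (fun i => chn (xi i) (cs i)) l)).
Proof. intros [Hp Hc]. split; apply flat_props with p; auto; intros i Hi; destruct (Hc i Hi) as [H1 [H2 H3]].
 - split. apply pts_srt; auto. rewrite <- H2. apply pts_in; auto; lra.
 - split. eapply chn_srt; eauto. rewrite <- H2. apply chn_in with (p i); auto; try lra; try (rewrite H2; lra). Qed.

Lemma FL a b f g psi u x y Tpsi Tu eps0 rho l p xi cs :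
  0 <= x -> 0 <= y -> 0 <= eps0 ->
  (forall t, a <= t <= b -> Rabs (f t - psi t) <= x / 2) ->
  (forall t, a <= t <= b -> Rabs (g t - u t) <= y / 2) ->
  (forall L, srt L -> inab a b L -> VarL psi L <= Tpsi) ->
  (forall L, srt L -> inab a b L -> VarL u L <= Tu) ->
  compactP f g a b eps0 rho ->
  famP a b l p xi cs -> (forall i, (i < l)%nat -> p (S i) - p i < rho) ->
  fsum (fun i => Rabs (Ec f g (xi i) (p i) (cs i))) l <=
  (eps0 + x) * Tu + (eps0 + y) * Tpsi + fsum (fun i => Rabs (Ec (fm f psi) (fm g u) (xi i) (p i) (cs i))) l.
Proof.
 intros Hx Hy He0 Hpsi Hu HTp HTu Hcp Hf Hrho.
 destruct (fam_lists a b l p xi cs Hf) as [[Hl1 Hl2] [Hl3 Hl4]].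
 destruct Hf as [Hp Hc].
 assert (Hper : forall i, (i < l)%nat -> Rabs (Ec f g (xi i) (p i) (cs i)) <=
    (eps0 + x) * VarL u (pts (p i) (cs i)) + (eps0 + y) * VarL psi (chn (xi i) (cs i)) +
    Rabs (Ec (fm f psi) (fm g u) (xi i) (p i) (cs i))).
 { intros i Hi. destruct (Hc i Hi) as [Hv [Hlast Hxi]].
   pose proof (partP_in a b l p i Hp ltac:(lia)). pose proof (partP_in a b l p (S i) Hp ltac:(lia)).
   pose proof (Var_nonneg u (pts (p i) (cs i))). pose proof (Var_nonneg psi (chn (xi i) (cs i))).
   assert (Hin : forall s r, In (s, r) (cs i) -> p i <= s <= p (S i)).
   { intros s r Hsr. destruct (vcells_in _ _ Hv _ _ Hsr). rewrite Hlast in *. lra. }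
   destruct (Hcp (p i) (p (S i)) (proj1 H) (proj2 (proj2 Hp) i Hi) (proj2 H0) (Hrho i Hi)) as [Hof|Hog].
   -
     assert (E : Ec f g (xi i) (p i) (cs i) = Ec f u (xi i) (p i) (cs i) + Ec psi (fm g u) (xi i) (p i) (cs i)
        + Ec (fm f psi) (fm g u) (xi i) (p i) (cs i)).
     { rewrite Ec_lin1, !Ec_lin2. ring. }
     rewrite E. eapply Rle_trans. apply Rabs_triang. apply Rplus_le_compat_r.
     eapply Rle_trans. apply Rabs_triang.
     assert (Rabs (Ec f u (xi i) (p i) (cs i)) <= eps0 * VarL u (pts (p i) (cs i))).
     { apply Ec_bound_a; auto. intros s r Hsr. apply Hof; [apply (Hin s r Hsr) | lra]. }
     assert (Rabs (Ec psi (fm g u) (xi i) (p i) (cs i)) <= y * VarL psi (chn (xi i) (cs i))).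
     { apply Ec_bound_b; auto. rewrite Hlast. intros t1 t2 Ht1 Ht2. unfold fm.
       pose proof (Hu t1 ltac:(lra)). pose proof (Hu t2 ltac:(lra)).
       replace (g t1 - u t1 - (g t2 - u t2)) with ((g t1 - u t1) + - (g t2 - u t2)) by ring.
       eapply Rle_trans. apply Rabs_triang. rewrite Rabs_Ropp. lra. }
     nra.
   - assert (E : Ec f g (xi i) (p i) (cs i) = Ec psi g (xi i) (p i) (cs i) + Ec (fm f psi) u (xi i) (p i) (cs i)
        + Ec (fm f psi) (fm g u) (xi i) (p i) (cs i)).
     { rewrite !Ec_lin1, !Ec_lin2. ring. }
     rewrite E. eapply Rle_trans. apply Rabs_triang. apply Rplus_le_compat_r.
     eapply Rle_trans. apply Rabs_triang.
     assert (Rabs (Ec psi g (xi i) (p i) (cs i)) <= eps0 * VarL psi (chn (xi i) (cs i))).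
     { apply Ec_bound_b; auto. rewrite Hlast. auto. }
     assert (Rabs (Ec (fm f psi) u (xi i) (p i) (cs i)) <= x * VarL u (pts (p i) (cs i))).
     { apply Ec_bound_a; auto. intros s r Hsr. pose proof (Hin s r Hsr). unfold fm.
       pose proof (Hpsi s ltac:(lra)). pose proof (Hpsi (xi i) ltac:(lra)).
       replace (f s - psi s - (f (xi i) - psi (xi i))) with ((f s - psi s) + - (f (xi i) - psi (xi i))) by ring.
       eapply Rle_trans. apply Rabs_triang. rewrite Rabs_Ropp. lra. }
     nra. }
 eapply Rle_trans. apply fsum_le. exact Hper.
 rewrite !fsum_plus, !fsum_scal.
 pose proof (flat_var u (fun i => pts (p i) (cs i)) l).
 pose proof (flat_var psi (fun i => chn (xi i) (cs i)) l).
 pose proof (HTu _ Hl1 Hl2). pose proof (HTp _ Hl3 Hl4).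
 assert ((eps0 + x) * fsum (fun i => VarL u (pts (p i) (cs i))) l <= (eps0 + x) * Tu).
 { apply Rmult_le_compat_l; lra. }
 assert ((eps0 + y) * fsum (fun i => VarL psi (chn (xi i) (cs i))) l <= (eps0 + y) * Tpsi).
 { apply Rmult_le_compat_l; lra. }
 lra.
Qed.

Lemma apx_seq2 h a b (d : nat -> R) (eps : nat -> R) : a <= b -> (forall k, 0 <= d k) -> (forall k, 0 < eps k) ->
  exists psi : nat -> R -> R, forall k, apx h a b (d k) (eps k) (psi k).
Proof. intros Hab Hd He. apply (choice (fun k u => apx h a b (d k) (eps k) u)).
 intros k. destruct (approx h a b (d k) (eps k) Hab (Hd k) (He k)) as [u Hu]. exists u. exact Hu. Qed.

Lemma fsum_mono_n (v : nat -> R) n m : (forall k, 0 <= v k) -> (n <= m)%nat -> fsum v n <= fsum v m.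
Proof. intros Hv Hnm. replace m with (n + (m - n))%nat by lia. rewrite fsum_add.
 pose proof (fsum_nonneg (fun i => v (n + i)%nat) (m - n) (fun i _ => Hv _)). lra. Qed.

Lemma tail_sum (v : nat -> R) W : (forall k, 0 <= v k) -> (forall n, fsum v n <= W) ->
  forall eps, 0 < eps -> exists m, forall m', (m <= m')%nat -> forall n, fsum (fun j => v (m' + j)%nat) n <= eps.
Proof. intros Hv HW eps He. apply NNPP. intros Hn.
 assert (Hstep : forall m, exists n, fsum (fun j => v (m + j)%nat) n > eps).
 { intros m. apply NNPP. intros Hm. apply Hn. exists m. intros m' Hm' n.
   apply Rnot_lt_le. intros Hlt. apply Hm. exists (m' - m + n)%nat.
   replace (m' - m + n)%nat with ((m' - m) + n)%nat by lia.
   assert (E : fsum (fun j => v (m + j)%nat) ((m' - m) + n) =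
     fsum (fun j => v (m + j)%nat) (m' - m) + fsum (fun j => v (m' + j)%nat) n).
   { rewrite fsum_add. f_equal. apply fsum_ext. intros. f_equal. lia. }
   rewrite E. pose proof (fsum_nonneg (fun j => v (m + j)%nat) (m' - m) (fun i _ => Hv _)). lra. }
 assert (Hk : forall K : nat, exists M, fsum v M >= INR K * eps).
 { induction K. exists O. simpl. lra. destruct IHK as [M HM]. destruct (Hstep M) as [n Hn'].
   exists (M + n)%nat. rewrite fsum_add. rewrite S_INR. lra. }
 destruct (archimed (W / eps)) as [H1 _].
 assert (0 <= IZR (up (W / eps))).
 { pose proof (HW O). simpl in H. assert (0 <= W / eps) by (apply Rdiv_le_0_compat; lra). lra. }
 destruct (Hk (Z.to_nat (up (W / eps)))) as [M HM].
 rewrite INR_IZR_INZ, Z2Nat.id in HM. 2: { apply le_IZR. auto. }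
 specialize (HW M). assert (W / eps * eps = W) by (field; lra).
 assert (IZR (up (W / eps)) * eps > W / eps * eps) by (apply Rmult_gt_compat_r; lra). lra. Qed.

Lemma Var_flat_bound h c P eps a b l (xi : nat -> R) (cs : nat -> list (R*R)) (F : nat -> list (R * R) -> R -> list R) :
  0 <= c -> (forall L, srt L -> inab a b L -> c * VarL h L <= P + c * eps) ->
  srt (flat (fun i => F i (cs i) (xi i)) l) -> inab a b (flat (fun i => F i (cs i) (xi i)) l) ->
  c * fsum (fun i => VarL h (F i (cs i) (xi i))) l <= P + c * eps.
Proof. intros Hc H H1 H2. eapply Rle_trans; [|apply H; eauto].
 apply Rmult_le_compat_l; auto. apply (flat_var h (fun i => F i (cs i) (xi i))). Qed.

Definition APk (f g : R -> R) (a b delta : R) := exists (psi u : R -> R) (x y Tpsi Tu : R),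
  0 <= x /\ 0 <= y /\ (forall t, a <= t <= b -> Rabs (f t - psi t) <= x / 2) /\
  (forall t, a <= t <= b -> Rabs (g t - u t) <= y / 2) /\
  (forall L, srt L -> inab a b L -> VarL psi L <= Tpsi) /\
  (forall L, srt L -> inab a b L -> VarL u L <= Tu) /\
  x * Tu + y * Tpsi <= delta /\
  (forall l p xi cs, famP a b l p xi cs ->
     fsum (fun i => Rabs (Ec (fm f psi) (fm g u) (xi i) (p i) (cs i))) l <= delta).

Definition Sp h (l : nat) (p : nat -> R) (cs : nat -> list (R * R)) := fsum (fun i => VarL h (pts (p i) (cs i))) l.
Definition Sc h (l : nat) (xi : nat -> R) (cs : nat -> list (R * R)) := fsum (fun i => VarL h (chn (xi i) (cs i))) l.

Lemma Sp_bound a b l p xi cs h c P eps : famP a b l p xi cs -> 0 <= c ->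
  (forall L, srt L -> inab a b L -> c * VarL h L <= P + c * eps) -> c * Sp h l p cs <= P + c * eps.
Proof. intros Hf Hc H. destruct (fam_lists a b l p xi cs Hf) as [[H1 H2] _].
 eapply Rle_trans; [|apply H; eauto]. apply Rmult_le_compat_l; auto.
 apply (flat_var h (fun i => pts (p i) (cs i))). Qed.

Lemma Sc_bound a b l p xi cs h c P eps : famP a b l p xi cs -> 0 <= c ->
  (forall L, srt L -> inab a b L -> c * VarL h L <= P + c * eps) -> c * Sc h l xi cs <= P + c * eps.
Proof. intros Hf Hc H. destruct (fam_lists a b l p xi cs Hf) as [_ [H1 H2]].
 eapply Rle_trans; [|apply H; eauto]. apply Rmult_le_compat_l; auto.
 apply (flat_var h (fun i => chn (xi i) (cs i))). Qed.

Lemma Sp_nonneg h l p cs : 0 <= Sp h l p cs.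
Proof. apply fsum_nonneg. intros; apply Var_nonneg. Qed.
Lemma Sc_nonneg h l xi cs : 0 <= Sc h l xi cs.
Proof. apply fsum_nonneg. intros; apply Var_nonneg. Qed.

Lemma geom_sum eps1 m n : 0 <= eps1 -> fsum (fun j => eps1 / 2 ^ (m + j)) n <= 2 * eps1.
Proof. intros He. assert (forall n, fsum (fun j => / 2 ^ j) n = 2 - 2 * / 2 ^ n).
 { induction n0. simpl. field. simpl fsum. rewrite IHn0. simpl. field. pose proof (pow2_ge1 n0). lra. }
 eapply Rle_trans. apply fsum_le with (G := fun j => eps1 * / 2 ^ j). intros j _.
 unfold Rdiv. apply Rmult_le_compat_l; auto. apply Rinv_le_contravar. pose proof (pow2_ge1 j); lra.
 apply Rle_pow. lra. lia.
 rewrite fsum_scal, H. assert (0 < / 2 ^ n) by (apply Rinv_0_lt_compat; pose proof (pow2_ge1 n); lra). nra. Qed.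

Lemma fam_in a b l p xi cs i s r : famP a b l p xi cs -> (i < l)%nat -> In (s, r) (cs i) -> a <= s <= b /\ a <= xi i <= b.
Proof. intros [Hp Hc] Hi Hin. destruct (Hc i Hi) as [Hv [Hl Hx]].
 pose proof (partP_in a b l p i Hp ltac:(lia)). pose proof (partP_in a b l p (S i) Hp ltac:(lia)).
 destruct (vcells_in _ _ Hv _ _ Hin). rewrite Hl in *. lra. Qed.

Lemma fam_osc a b l p xi cs i w C : famP a b l p xi cs -> (i < l)%nat -> oscb w a b C ->
  oscb w (p i) (lastr (p i) (cs i)) C.
Proof. intros [Hp Hc] Hi Ho. destruct (Hc i Hi) as [Hv [Hl Hx]]. rewrite Hl.
 pose proof (partP_in a b l p i Hp ltac:(lia)). pose proof (partP_in a b l p (S i) Hp ltac:(lia)).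
 eapply oscb_sub; [| |exact Ho]; lra. Qed.

Lemma tailS a b f g eta theta W1 W2 :
  a < b -> nonincr_to_zero eta -> nonincr_to_zero theta -> (forall k, 0 < eta k) -> (forall k, 0 < theta k) ->
  wsum (shift_seq (sup_dev f a b a) eta) g a b theta = Finite W1 ->
  wsum (fun k => Finite (theta k)) f a b eta = Finite W2 ->
  forall delta, 0 < delta -> APk f g a b delta.
Proof.
 intros Hab Heta Hth Hep Htp HW1 HW2 delta Hdel.
 pose proof Heta as [Hen [Hed Hel]]. pose proof Hth as [Htn [Htd Htl]].
 set (em1 := sup_dev f a b a) in *.
 assert (Hem1 : Rbar_le 0 em1) by (apply sup_dev_nonneg; lra).
 destruct (wsum_props (shift_seq em1 eta) g a b theta W1 (Rlt_le _ _ Hab)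
   (fun k => shift_nonneg em1 eta k Hem1 Hen) HW1) as [e [He [He0 [HeS HeT]]]].
 destruct (wsum_props (fun k => Finite (theta k)) f a b eta W2 (Rlt_le _ _ Hab)
   (fun k => Htn k) HW2) as [d [Hd [Hd0 [HdS HdT]]]].
 set (dl := delta / 16).
 assert (Hdl : 0 < dl) by (unfold dl; lra).
 destruct (tail_sum e W1 He0 HeS dl Hdl) as [m1 Hm1].
 destruct (tail_sum d W2 Hd0 HdS dl Hdl) as [m2 Hm2].
 set (m := S (Nat.max m1 m2)).
 set (K := eta O + theta O + 1).
 assert (HK : 1 <= K) by (unfold K; pose proof (Hen O); pose proof (Htn O); lra).
 set (eps1 := delta / (18 * K)).
 assert (Heps1 : 0 < eps1) by (unfold eps1; apply Rdiv_lt_0_compat; lra).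
 set (ep := fun k : nat => eps1 / 2 ^ k).
 assert (Hep0 : forall k, 0 < ep k) by (intros k; unfold ep; apply Rdiv_lt_0_compat; auto; pose proof (pow2_ge1 k); lra).
 assert (Hep1 : forall k, ep k <= eps1).
 { intros k. unfold ep. pose proof (pow2_ge1 k). unfold Rdiv.
   rewrite <- (Rmult_1_r eps1) at 2. apply Rmult_le_compat_l. lra.
   rewrite <- Rinv_1. apply Rinv_le_contravar; lra. }
 assert (Hepm : forall k, ep (S k) <= ep k).
 { intros k. unfold ep. simpl. unfold Rdiv. apply Rmult_le_compat_l. lra.
   apply Rinv_le_contravar. pose proof (pow2_ge1 k); lra. pose proof (pow2_ge1 k); lra. }
 destruct (apx_seq2 f a b eta ep) as [psi Hpsi]; try lra; auto.
 destruct (apx_seq2 g a b theta ep) as [u Hu]; try lra; auto.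
 assert (Hek : forall k, eta k <= K).
 { intros k. pose proof (nonincr_le0 eta k Heta). unfold K. pose proof (Htn O). lra. }
 assert (Htk : forall k, theta k <= K).
 { intros k. pose proof (nonincr_le0 theta k Hth). unfold K. pose proof (Hen O). lra. }
 assert (Hetail : forall m', (m1 <= m')%nat -> forall n, fsum (fun j => e (m' + j)%nat) n <= dl) by auto.
 assert (Hdtail : forall m', (m2 <= m')%nat -> forall n, fsum (fun j => d (m' + j)%nat) n <= dl) by auto.
 assert (Hdsmall : forall k, (m2 <= k)%nat -> d k <= dl).
 { intros k Hk. specialize (Hdtail k Hk 1%nat). simpl in Hdtail. rewrite Nat.add_0_r in Hdtail. lra. }
 assert (Hesmall : forall k, (m1 <= k)%nat -> e k <= dl).
 { intros k Hk. specialize (Hetail k Hk 1%nat). simpl in Hetail. rewrite Nat.add_0_r in Hetail. lra. }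
 destruct (TV f a b (eta m)) as [tf| |] eqn:ETf.
 2:{ specialize (Hd m). rewrite ETf in Hd. destruct (Rbar_mult_pinfty _ _ (Htn m) Hd). specialize (Htp m). lra. }
 2:{ pose proof (TV_ge0 f a b (eta m) ltac:(lra)). rewrite ETf in H. contradiction. }
 destruct (TV g a b (theta m)) as [tg| |] eqn:ETg.
 2:{ specialize (He m). rewrite ETg in He. unfold m in He. simpl in He.
     destruct (Rbar_mult_pinfty _ _ (Hen _) He). specialize (Hep (Nat.max m1 m2)). lra. }
 2:{ pose proof (TV_ge0 g a b (theta m) ltac:(lra)). rewrite ETg in H. contradiction. }
 assert (Hdm : d m = theta m * tf). { specialize (Hd m). rewrite ETf in Hd. simpl in Hd. inversion Hd; auto. }
 exists (psi m), (u m), (eta m), (theta m), (tf + ep m), (tg + ep m).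
 split. apply Hen. split. apply Htn. split. apply Hpsi. split. apply Hu.
 split. { intros L H1 H2. pose proof (proj2 (Hpsi m) 1 tf ltac:(lra)). rewrite ETf in H.
   simpl in H. rewrite Rmult_1_l in H. specialize (H eq_refl L H1 H2). lra. }
 split. { intros L H1 H2. pose proof (proj2 (Hu m) 1 tg ltac:(lra)). rewrite ETg in H.
   simpl in H. rewrite Rmult_1_l in H. specialize (H eq_refl L H1 H2). lra. }
 split.
 { destruct (Rbar_mult_mono_fin (eta m) (TV g a b (theta m)) (TV g a b (theta (S m))) (e (S m)))
     as [P1 [HP1 [HP10 HP11]]]; auto.
   apply TV_ge0; lra. apply TV_mono. apply Htd. rewrite <- (He (S m)). reflexivity.
   rewrite ETg in HP1. simpl in HP1. inversion HP1.
   assert (e (S m) <= dl) by (apply Hesmall; unfold m; lia).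
   assert (d m <= dl) by (apply Hdsmall; unfold m; lia).
   pose proof (Hep1 m). pose proof (Hek m). pose proof (Htk m). pose proof (Hep0 m).
   assert (eta m * ep m + theta m * ep m <= K * eps1).
   { unfold K. pose proof (Hen m). pose proof (Htn m). 
     assert (eta m + theta m <= eta O + theta O) by (pose proof (nonincr_le0 eta m Heta); pose proof (nonincr_le0 theta m Hth); lra).
     nra. }
   assert (K * eps1 = delta / 18) by (unfold eps1; field; lra).
   rewrite !Rmult_plus_distr_l. unfold dl in *. lra. }
 intros l p xi cs Hf.
 set (Lc := flat (fun i => chn (xi i) (cs i)) l).
 set (Vf := VarL f Lc).
 assert (HVf : 0 <= Vf) by apply Var_nonneg.
 destruct (lim_small theta Hth (dl / (Vf + 1))) as [N1 HN1].
 { apply Rdiv_lt_0_compat; lra. }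
 set (n := N1).
 set (Psi := shiftf psi). set (U := shiftf u).
 assert (Hper : forall i, (i < l)%nat ->
   Rabs (Ec (fm f (psi m)) (fm g (u m)) (xi i) (p i) (cs i)) <=
   fsum (fun j => eta (m + j)%nat * (VarL (u (S (m + j))) (pts (p i) (cs i)) + VarL (u (m + j)%nat) (pts (p i) (cs i)))
        + theta (S (m + j)) * (VarL (psi (S (m + j))) (chn (xi i) (cs i)) + VarL (psi (m + j)%nat) (chn (xi i) (cs i)))) n
   + theta (m + n)%nat * (VarL f (chn (xi i) (cs i)) + VarL (psi (m + n)%nat) (chn (xi i) (cs i)))).
 { intros i Hi. destruct Hf as [Hp Hc]. destruct (Hc i Hi) as [Hv [Hl Hx]].
   pose proof (fam_in a b l p xi cs i) as Hfi.
   assert (Hfam : famP a b l p xi cs) by (split; auto).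
   change (psi m) with (Psi (S m)). change (u m) with (U (S m)).
   rewrite (tel1 f g Psi U (xi i) (p i) (cs i) (S m) n).
   eapply Rle_trans. apply Rabs_triang. apply Rplus_le_compat.
   - eapply Rle_trans. apply fsum_abs. apply fsum_le. intros j _.
     simpl (S m + j)%nat. unfold T1. unfold Psi, U, shiftf.
     eapply Rle_trans. apply Rabs_triang. apply Rplus_le_compat.
     + eapply Rle_trans. apply (Ec_bound_a _ _ _ _ _ (eta (m + j)%nat)); auto.
       intros s r Hsr. destruct (Hfi s r Hfam Hi Hsr). eapply apx_diff. apply Hpsi. auto. auto.
       apply Rmult_le_compat_l. apply Hen. apply VarL_fm.
     + eapply Rle_trans. apply (Ec_bound_b _ _ _ _ _ (theta (S (m + j)))); auto.
       eapply fam_osc; eauto. eapply apx_osc. apply Hu.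
       apply Rmult_le_compat_l. apply Htn. apply VarL_fm.
   - simpl (S m + n)%nat. unfold Psi, U, shiftf.
     eapply Rle_trans. apply (Ec_bound_b _ _ _ _ _ (theta (m + n)%nat)); auto.
     eapply fam_osc; eauto. eapply apx_osc. apply Hu.
     apply Rmult_le_compat_l. apply Htn. apply VarL_fm. }
 eapply Rle_trans. apply fsum_le. exact Hper.
 rewrite fsum_plus. rewrite fsum_swap.
 assert (Hj : forall j, fsum (fun i => eta (m + j)%nat * (VarL (u (S (m + j))) (pts (p i) (cs i)) + VarL (u (m + j)%nat) (pts (p i) (cs i)))
        + theta (S (m + j)) * (VarL (psi (S (m + j))) (chn (xi i) (cs i)) + VarL (psi (m + j)%nat) (chn (xi i) (cs i)))) l
      <= 2 * e (S (m + j)) + d (S (m + j)) + d (m + j)%nat + 4 * K * ep (m + j)%nat).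
 { intros j. set (k' := (m + j)%nat).
   rewrite fsum_plus, !fsum_scal.
   replace (fsum (fun i => VarL (u (S k')) (pts (p i) (cs i)) + VarL (u k') (pts (p i) (cs i))) l)
     with (Sp (u (S k')) l p cs + Sp (u k') l p cs) by (unfold Sp; rewrite fsum_plus; auto).
   replace (fsum (fun i => VarL (psi (S k')) (chn (xi i) (cs i)) + VarL (psi k') (chn (xi i) (cs i))) l)
     with (Sc (psi (S k')) l xi cs + Sc (psi k') l xi cs) by (unfold Sc; rewrite fsum_plus; auto).
   assert (H1 : eta k' * Sp (u (S k')) l p cs <= e (S k') + eta k' * ep (S k')).
   { apply (Sp_bound a b l p xi cs (u (S k')) (eta k') (e (S k')) (ep (S k')) Hf (Hen k')).
     intros L HL1 HL2. apply (proj2 (Hu (S k')) (eta k') (e (S k')) (Hen k')); auto.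
     rewrite <- (He (S k')). reflexivity. }
   destruct (Rbar_mult_mono_fin (eta k') (TV g a b (theta k')) (TV g a b (theta (S k'))) (e (S k')))
     as [P1 [HP1 [HP10 HP11]]]; auto.
   apply TV_ge0; lra. apply TV_mono. apply Htd. rewrite <- (He (S k')). reflexivity.
   assert (H2 : eta k' * Sp (u k') l p cs <= P1 + eta k' * ep k').
   { apply (Sp_bound a b l p xi cs (u k') (eta k') P1 (ep k') Hf (Hen k')).
     intros L HL1 HL2. apply (proj2 (Hu k') (eta k') P1 (Hen k')); auto. }
   assert (H3 : theta (S k') * Sc (psi (S k')) l xi cs <= d (S k') + theta (S k') * ep (S k')).
   { apply (Sc_bound a b l p xi cs (psi (S k')) (theta (S k')) (d (S k')) (ep (S k')) Hf (Htn _)).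
     intros L HL1 HL2. apply (proj2 (Hpsi (S k')) (theta (S k')) (d (S k')) (Htn _)); auto. }
   assert (H4 : theta k' * Sc (psi k') l xi cs <= d k' + theta k' * ep k').
   { apply (Sc_bound a b l p xi cs (psi k') (theta k') (d k') (ep k') Hf (Htn _)).
     intros L HL1 HL2. apply (proj2 (Hpsi k') (theta k') (d k') (Htn _)); auto. }
   assert (theta (S k') * Sc (psi k') l xi cs <= theta k' * Sc (psi k') l xi cs).
   { apply Rmult_le_compat_r. apply Sc_nonneg. apply Htd. }
   pose proof (Hepm k'). pose proof (Hep0 k'). pose proof (Hek k'). pose proof (Htk k'). pose proof (Htk (S k')).
   pose proof (Hen k'). pose proof (Htn k'). pose proof (Htn (S k')).
   nra. }
 eapply Rle_trans. apply Rplus_le_compat_r. apply fsum_le. intros j _. apply Hj.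
 rewrite !fsum_plus, fsum_scal.
 assert (Hg : fsum (fun j => 4 * K * ep (m + j)%nat) n <= 8 * K * eps1).
 { rewrite fsum_scal. unfold ep. pose proof (geom_sum eps1 m n ltac:(lra)). nra. }
 assert (T1' : fsum (fun j => e (S (m + j))) n <= dl).
 { change (fun j => e (S (m + j))) with (fun j => e (S m + j)%nat).
   apply Hetail. unfold m; lia. }
 assert (T2' : fsum (fun j => d (S (m + j))) n <= dl).
 { change (fun j => d (S (m + j))) with (fun j => d (S m + j)%nat).
   apply Hdtail. unfold m; lia. }
 assert (T3' : fsum (fun j => d (m + j)%nat) n <= dl) by (apply Hdtail; unfold m; lia).
 rewrite (fsum_scal (theta (m+n)%nat) (fun i => VarL f (chn (xi i) (cs i)) + VarL (psi (m + n)%nat) (chn (xi i) (cs i))) l).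
 rewrite fsum_plus.
 assert (HR1 : theta (m + n)%nat * fsum (fun i => VarL f (chn (xi i) (cs i))) l <= dl).
 { assert (fsum (fun i => VarL f (chn (xi i) (cs i))) l <= Vf) by (apply (flat_var f (fun i => chn (xi i) (cs i)))).
   assert (theta (m + n)%nat <= dl / (Vf + 1)) by (apply HN1; unfold n; lia).
   pose proof (fsum_nonneg (fun i => VarL f (chn (xi i) (cs i))) l (fun i _ => Var_nonneg _ _)).
   assert (dl / (Vf + 1) * Vf <= dl).
   { unfold Rdiv. rewrite Rmult_assoc. assert (/ (Vf + 1) * Vf <= 1).
     { apply Rmult_le_reg_l with (Vf + 1). lra. rewrite <- Rmult_assoc, Rinv_r by lra. lra. } nra. }
   pose proof (Htn (m + n)%nat). nra. }
 assert (HR2 : theta (m + n)%nat * Sc (psi (m + n)%nat) l xi cs <= d (m + n)%nat + theta (m + n)%nat * ep (m + n)%nat).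
 { apply (Sc_bound a b l p xi cs (psi (m + n)%nat) (theta (m + n)%nat) (d (m + n)%nat) (ep (m + n)%nat) Hf (Htn _)).
   intros L HL1 HL2. apply (proj2 (Hpsi (m + n)%nat) (theta (m + n)%nat) (d (m + n)%nat) (Htn _)); auto. }
 unfold Sc in HR2.
 assert (d (m + n)%nat <= dl) by (apply Hdsmall; unfold m; lia).
 pose proof (Hep1 (m + n)%nat). pose proof (Htk (m + n)%nat). pose proof (Hep0 (m + n)%nat). pose proof (Htn (m + n)%nat).
 assert (theta (m + n)%nat * ep (m + n)%nat <= K * eps1) by nra.
 assert (K * eps1 = delta / 18) by (unfold eps1; field; lra).
 unfold dl in *. lra.
Qed.

Lemma tailSt a b f g eta theta W1 W2 :
  a < b -> nonincr_to_zero eta -> nonincr_to_zero theta -> (forall k, 0 < eta k) -> (forall k, 0 < theta k) ->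
  wsum (shift_seq (sup_dev g a b b) theta) f a b eta = Finite W1 ->
  wsum (fun k => Finite (eta k)) g a b theta = Finite W2 ->
  forall delta, 0 < delta -> APk f g a b delta.
Proof.
 intros Hab Heta Hth Hep Htp HW1 HW2 delta Hdel.
 pose proof Heta as [Hen [Hed Hel]]. pose proof Hth as [Htn [Htd Htl]].
 set (em1 := sup_dev g a b b) in *.
 assert (Hem1 : Rbar_le 0 em1) by (apply sup_dev_nonneg; lra).
 destruct (wsum_props (shift_seq em1 theta) f a b eta W1 (Rlt_le _ _ Hab)
   (fun k => shift_nonneg em1 theta k Hem1 Htn) HW1) as [e [He [He0 [HeS HeT]]]].
 destruct (wsum_props (fun k => Finite (eta k)) g a b theta W2 (Rlt_le _ _ Hab)
   (fun k => Hen k) HW2) as [d [Hd [Hd0 [HdS HdT]]]].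
 set (dl := delta / 16).
 assert (Hdl : 0 < dl) by (unfold dl; lra).
 destruct (tail_sum e W1 He0 HeS dl Hdl) as [m1 Hm1].
 destruct (tail_sum d W2 Hd0 HdS dl Hdl) as [m2 Hm2].
 set (m := S (Nat.max m1 m2)).
 set (K := eta O + theta O + 1).
 assert (HK : 1 <= K) by (unfold K; pose proof (Hen O); pose proof (Htn O); lra).
 set (eps1 := delta / (18 * K)).
 assert (Heps1 : 0 < eps1) by (unfold eps1; apply Rdiv_lt_0_compat; lra).
 set (ep := fun k : nat => eps1 / 2 ^ k).
 assert (Hep0 : forall k, 0 < ep k) by (intros k; unfold ep; apply Rdiv_lt_0_compat; auto; pose proof (pow2_ge1 k); lra).
 assert (Hep1 : forall k, ep k <= eps1).
 { intros k. unfold ep. pose proof (pow2_ge1 k). unfold Rdiv.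
   rewrite <- (Rmult_1_r eps1) at 2. apply Rmult_le_compat_l. lra.
   rewrite <- Rinv_1. apply Rinv_le_contravar; lra. }
 assert (Hepm : forall k, ep (S k) <= ep k).
 { intros k. unfold ep. simpl. unfold Rdiv. apply Rmult_le_compat_l. lra.
   apply Rinv_le_contravar. pose proof (pow2_ge1 k); lra. pose proof (pow2_ge1 k); lra. }
 destruct (apx_seq2 f a b eta ep) as [psi Hpsi]; try lra; auto.
 destruct (apx_seq2 g a b theta ep) as [u Hu]; try lra; auto.
 assert (Hek : forall k, eta k <= K).
 { intros k. pose proof (nonincr_le0 eta k Heta). unfold K. pose proof (Htn O). lra. }
 assert (Htk : forall k, theta k <= K).
 { intros k. pose proof (nonincr_le0 theta k Hth). unfold K. pose proof (Hen O). lra. }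
 assert (Hetail : forall m', (m1 <= m')%nat -> forall n, fsum (fun j => e (m' + j)%nat) n <= dl) by auto.
 assert (Hdtail : forall m', (m2 <= m')%nat -> forall n, fsum (fun j => d (m' + j)%nat) n <= dl) by auto.
 assert (Hdsmall : forall k, (m2 <= k)%nat -> d k <= dl).
 { intros k Hk. specialize (Hdtail k Hk 1%nat). simpl in Hdtail. rewrite Nat.add_0_r in Hdtail. lra. }
 assert (Hesmall : forall k, (m1 <= k)%nat -> e k <= dl).
 { intros k Hk. specialize (Hetail k Hk 1%nat). simpl in Hetail. rewrite Nat.add_0_r in Hetail. lra. }
 destruct (TV g a b (theta m)) as [tg| |] eqn:ETg.
 2:{ specialize (Hd m). rewrite ETg in Hd. destruct (Rbar_mult_pinfty _ _ (Hen m) Hd). specialize (Hep m). lra. }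
 2:{ pose proof (TV_ge0 g a b (theta m) ltac:(lra)). rewrite ETg in H. contradiction. }
 destruct (TV f a b (eta m)) as [tf| |] eqn:ETf.
 2:{ specialize (He m). rewrite ETf in He. unfold m in He. simpl in He.
     destruct (Rbar_mult_pinfty _ _ (Htn _) He). specialize (Htp (Nat.max m1 m2)). lra. }
 2:{ pose proof (TV_ge0 f a b (eta m) ltac:(lra)). rewrite ETf in H. contradiction. }
 assert (Hdm : d m = eta m * tg). { specialize (Hd m). rewrite ETg in Hd. simpl in Hd. inversion Hd; auto. }
 exists (psi m), (u m), (eta m), (theta m), (tf + ep m), (tg + ep m).
 split. apply Hen. split. apply Htn. split. apply Hpsi. split. apply Hu.
 split. { intros L H1 H2. pose proof (proj2 (Hpsi m) 1 tf ltac:(lra)). rewrite ETf in H.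
   simpl in H. rewrite Rmult_1_l in H. specialize (H eq_refl L H1 H2). lra. }
 split. { intros L H1 H2. pose proof (proj2 (Hu m) 1 tg ltac:(lra)). rewrite ETg in H.
   simpl in H. rewrite Rmult_1_l in H. specialize (H eq_refl L H1 H2). lra. }
 split.
 { destruct (Rbar_mult_mono_fin (theta m) (TV f a b (eta m)) (TV f a b (eta (S m))) (e (S m)))
     as [P1 [HP1 [HP10 HP11]]]; auto.
   apply TV_ge0; lra. apply TV_mono. apply Hed. rewrite <- (He (S m)). reflexivity.
   rewrite ETf in HP1. simpl in HP1. inversion HP1.
   assert (e (S m) <= dl) by (apply Hesmall; unfold m; lia).
   assert (d m <= dl) by (apply Hdsmall; unfold m; lia).
   pose proof (Hep1 m). pose proof (Hek m). pose proof (Htk m). pose proof (Hep0 m).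
   assert (eta m * ep m + theta m * ep m <= K * eps1).
   { unfold K. pose proof (Hen m). pose proof (Htn m). 
     assert (eta m + theta m <= eta O + theta O) by (pose proof (nonincr_le0 eta m Heta); pose proof (nonincr_le0 theta m Hth); lra).
     nra. }
   assert (K * eps1 = delta / 18) by (unfold eps1; field; lra).
   rewrite !Rmult_plus_distr_l. unfold dl in *. lra. }
 intros l p xi cs Hf.
 set (Lc := flat (fun i => pts (p i) (cs i)) l).
 set (Vf := VarL g Lc).
 assert (HVf : 0 <= Vf) by apply Var_nonneg.
 destruct (lim_small eta Heta (dl / (Vf + 1))) as [N1 HN1].
 { apply Rdiv_lt_0_compat; lra. }
 set (n := N1).
 set (Psi := shiftf psi). set (U := shiftf u).
 assert (Hper : forall i, (i < l)%nat ->
   Rabs (Ec (fm f (psi m)) (fm g (u m)) (xi i) (p i) (cs i)) <=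
   fsum (fun j => theta (m + j)%nat * (VarL (psi (S (m + j))) (chn (xi i) (cs i)) + VarL (psi (m + j)%nat) (chn (xi i) (cs i)))
        + eta (S (m + j)) * (VarL (u (S (m + j))) (pts (p i) (cs i)) + VarL (u (m + j)%nat) (pts (p i) (cs i)))) n
   + eta (m + n)%nat * (VarL g (pts (p i) (cs i)) + VarL (u (m + n)%nat) (pts (p i) (cs i)))).
 { intros i Hi. destruct Hf as [Hp Hc]. destruct (Hc i Hi) as [Hv [Hl Hx]].
   pose proof (fam_in a b l p xi cs i) as Hfi.
   assert (Hfam : famP a b l p xi cs) by (split; auto).
   change (psi m) with (Psi (S m)). change (u m) with (U (S m)).
   rewrite (tel2 f g Psi U (xi i) (p i) (cs i) (S m) n).
   eapply Rle_trans. apply Rabs_triang. apply Rplus_le_compat.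
   - eapply Rle_trans. apply fsum_abs. apply fsum_le. intros j _.
     simpl (S m + j)%nat. unfold T2. unfold Psi, U, shiftf.
     eapply Rle_trans. apply Rabs_triang. apply Rplus_le_compat.
     + eapply Rle_trans. apply (Ec_bound_b _ _ _ _ _ (theta (m + j)%nat)); auto.
       eapply fam_osc; eauto. eapply apx_osc. apply Hu.
       apply Rmult_le_compat_l. apply Htn. apply VarL_fm.
     + eapply Rle_trans. apply (Ec_bound_a _ _ _ _ _ (eta (S (m + j)))); auto.
       intros s r Hsr. destruct (Hfi s r Hfam Hi Hsr). eapply apx_diff. apply Hpsi. auto. auto.
       apply Rmult_le_compat_l. apply Hen. apply VarL_fm.
   - simpl (S m + n)%nat. unfold Psi, U, shiftf.
     eapply Rle_trans. apply (Ec_bound_a _ _ _ _ _ (eta (m + n)%nat)); auto.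
     intros s r Hsr. destruct (Hfi s r Hfam Hi Hsr). eapply apx_diff. apply Hpsi. auto. auto.
     apply Rmult_le_compat_l. apply Hen. apply VarL_fm. }
 eapply Rle_trans. apply fsum_le. exact Hper.
 rewrite fsum_plus. rewrite fsum_swap.
 assert (Hj : forall j, fsum (fun i => theta (m + j)%nat * (VarL (psi (S (m + j))) (chn (xi i) (cs i)) + VarL (psi (m + j)%nat) (chn (xi i) (cs i)))
        + eta (S (m + j)) * (VarL (u (S (m + j))) (pts (p i) (cs i)) + VarL (u (m + j)%nat) (pts (p i) (cs i)))) l
      <= 2 * e (S (m + j)) + d (S (m + j)) + d (m + j)%nat + 4 * K * ep (m + j)%nat).
 { intros j. set (k' := (m + j)%nat).
   rewrite fsum_plus, !fsum_scal.
   replace (fsum (fun i => VarL (u (S k')) (pts (p i) (cs i)) + VarL (u k') (pts (p i) (cs i))) l)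
     with (Sp (u (S k')) l p cs + Sp (u k') l p cs) by (unfold Sp; rewrite fsum_plus; auto).
   replace (fsum (fun i => VarL (psi (S k')) (chn (xi i) (cs i)) + VarL (psi k') (chn (xi i) (cs i))) l)
     with (Sc (psi (S k')) l xi cs + Sc (psi k') l xi cs) by (unfold Sc; rewrite fsum_plus; auto).
   assert (H1 : theta k' * Sc (psi (S k')) l xi cs <= e (S k') + theta k' * ep (S k')).
   { apply (Sc_bound a b l p xi cs (psi (S k')) (theta k') (e (S k')) (ep (S k')) Hf (Htn k')).
     intros L HL1 HL2. apply (proj2 (Hpsi (S k')) (theta k') (e (S k')) (Htn k')); auto.
     rewrite <- (He (S k')). reflexivity. }
   destruct (Rbar_mult_mono_fin (theta k') (TV f a b (eta k')) (TV f a b (eta (S k'))) (e (S k')))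
     as [P1 [HP1 [HP10 HP11]]]; auto.
   apply TV_ge0; lra. apply TV_mono. apply Hed. rewrite <- (He (S k')). reflexivity.
   assert (H2 : theta k' * Sc (psi k') l xi cs <= P1 + theta k' * ep k').
   { apply (Sc_bound a b l p xi cs (psi k') (theta k') P1 (ep k') Hf (Htn k')).
     intros L HL1 HL2. apply (proj2 (Hpsi k') (theta k') P1 (Htn k')); auto. }
   assert (H3 : eta (S k') * Sp (u (S k')) l p cs <= d (S k') + eta (S k') * ep (S k')).
   { apply (Sp_bound a b l p xi cs (u (S k')) (eta (S k')) (d (S k')) (ep (S k')) Hf (Hen _)).
     intros L HL1 HL2. apply (proj2 (Hu (S k')) (eta (S k')) (d (S k')) (Hen _)); auto. }
   assert (H4 : eta k' * Sp (u k') l p cs <= d k' + eta k' * ep k').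
   { apply (Sp_bound a b l p xi cs (u k') (eta k') (d k') (ep k') Hf (Hen _)).
     intros L HL1 HL2. apply (proj2 (Hu k') (eta k') (d k') (Hen _)); auto. }
   assert (eta (S k') * Sp (u k') l p cs <= eta k' * Sp (u k') l p cs).
   { apply Rmult_le_compat_r. apply Sp_nonneg. apply Hed. }
   pose proof (Hepm k'). pose proof (Hep0 k'). pose proof (Hep0 (S k')). pose proof (Hek k'). pose proof (Htk k'). pose proof (Hek (S k')).
   pose proof (Hen k'). pose proof (Htn k'). pose proof (Hen (S k')).
   assert (A1 : theta k' * ep (S k') <= K * ep k') by nra.
   assert (A2 : theta k' * ep k' <= K * ep k') by nra.
   assert (A3 : eta (S k') * ep (S k') <= K * ep k') by nra.
   assert (A4 : eta k' * ep k' <= K * ep k') by nra.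
   rewrite !Rmult_plus_distr_l. lra. }
 eapply Rle_trans. apply Rplus_le_compat_r. apply fsum_le. intros j _. apply Hj.
 rewrite !fsum_plus, fsum_scal.
 assert (Hg : fsum (fun j => 4 * K * ep (m + j)%nat) n <= 8 * K * eps1).
 { rewrite fsum_scal. unfold ep. pose proof (geom_sum eps1 m n ltac:(lra)). nra. }
 assert (T1' : fsum (fun j => e (S (m + j))) n <= dl).
 { change (fun j => e (S (m + j))) with (fun j => e (S m + j)%nat).
   apply Hetail. unfold m; lia. }
 assert (T2' : fsum (fun j => d (S (m + j))) n <= dl).
 { change (fun j => d (S (m + j))) with (fun j => d (S m + j)%nat).
   apply Hdtail. unfold m; lia. }
 assert (T3' : fsum (fun j => d (m + j)%nat) n <= dl) by (apply Hdtail; unfold m; lia).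
 rewrite (fsum_scal (eta (m+n)%nat) (fun i => VarL g (pts (p i) (cs i)) + VarL (u (m + n)%nat) (pts (p i) (cs i))) l).
 rewrite fsum_plus.
 assert (HR1 : eta (m + n)%nat * fsum (fun i => VarL g (pts (p i) (cs i))) l <= dl).
 { assert (fsum (fun i => VarL g (pts (p i) (cs i))) l <= Vf) by (apply (flat_var g (fun i => pts (p i) (cs i)))).
   assert (eta (m + n)%nat <= dl / (Vf + 1)) by (apply HN1; unfold n; lia).
   pose proof (fsum_nonneg (fun i => VarL g (pts (p i) (cs i))) l (fun i _ => Var_nonneg _ _)).
   assert (dl / (Vf + 1) * Vf <= dl).
   { unfold Rdiv. rewrite Rmult_assoc. assert (/ (Vf + 1) * Vf <= 1).
     { apply Rmult_le_reg_l with (Vf + 1). lra. rewrite <- Rmult_assoc, Rinv_r by lra. lra. } nra. }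
   pose proof (Hen (m + n)%nat). nra. }
 assert (HR2 : eta (m + n)%nat * Sp (u (m + n)%nat) l p cs <= d (m + n)%nat + eta (m + n)%nat * ep (m + n)%nat).
 { apply (Sp_bound a b l p xi cs (u (m + n)%nat) (eta (m + n)%nat) (d (m + n)%nat) (ep (m + n)%nat) Hf (Hen _)).
   intros L HL1 HL2. apply (proj2 (Hu (m + n)%nat) (eta (m + n)%nat) (d (m + n)%nat) (Hen _)); auto. }
 unfold Sp in HR2.
 assert (d (m + n)%nat <= dl) by (apply Hdsmall; unfold m; lia).
 pose proof (Hep1 (m + n)%nat). pose proof (Hek (m + n)%nat). pose proof (Hep0 (m + n)%nat). pose proof (Hen (m + n)%nat).
 assert (eta (m + n)%nat * ep (m + n)%nat <= K * eps1) by nra.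
 assert (K * eps1 = delta / 18) by (unfold eps1; field; lra).
 unfold dl in *. lra.
Qed.

Lemma last_def (y : R) L d1 d2 : last (y :: L) d1 = last (y :: L) d2.
Proof. revert y; induction L as [|z L IH]; intros y. reflexivity.
 change (last (z :: L) d1 = last (z :: L) d2). apply IH. Qed.

Lemma var_piece (u : R -> R) (pi : R -> nat) a b B :
  (forall x y, a <= x -> x <= y -> y <= b -> (pi x <= pi y)%nat) ->
  (forall x y, a <= x <= b -> a <= y <= b -> pi x = pi y -> u x = u y) ->
  (forall x, a <= x <= b -> Rabs (u x) <= B) ->
  forall x L, srt (x :: L) -> inab a b (x :: L) ->
  VarL u (x :: L) <= 2 * B * (INR (pi (last (x :: L) x)) - INR (pi x)).
Proof. intros Hm Hu HB x L. revert x. induction L as [|y L IH].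
 { intros x Hs Hin. simpl. rewrite Rminus_diag, Rmult_0_r. lra. }
 intros x Hs Hin. rewrite Var_cons2. destruct Hs as [Hxy Hs].
 assert (Hx : a <= x <= b) by (apply Hin; simpl; auto).
 assert (Hy : a <= y <= b) by (apply Hin; simpl; auto).
 specialize (IH y Hs (fun z Hz => Hin z (or_intror Hz))).
 replace (last (x :: y :: L) x) with (last (y :: L) y).
 2:{ change (last (x :: y :: L) x) with (last (y :: L) x). apply last_def. }
 assert (Hpxy : (pi x <= pi y)%nat) by (apply Hm; lra).
 assert (0 <= B) by (pose proof (HB x Hx); pose proof (Rabs_pos (u x)); lra).
 assert (Rabs (u y - u x) <= 2 * B * (INR (pi y) - INR (pi x))).
 { destruct (Nat.eq_dec (pi x) (pi y)) as [E|E].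
   - rewrite (Hu x y Hx Hy E), Rminus_diag, Rabs_R0, E. lra.
   - assert (1 <= INR (pi y) - INR (pi x)).
     { rewrite <- minus_INR by lia. replace 1 with (INR 1) by reflexivity. apply le_INR. lia. }
     pose proof (HB x Hx). pose proof (HB y Hy).
     assert (Rabs (u y - u x) <= 2 * B).
     { unfold Rminus. eapply Rle_trans. apply Rabs_triang. rewrite Rabs_Ropp. lra. }
     nra. }
 lra. Qed.

Lemma Int_part_mono r1 r2 : r1 <= r2 -> (Int_part r1 <= Int_part r2)%Z.
Proof. intros H. destruct (base_Int_part r1). destruct (base_Int_part r2).
 apply Z.nlt_ge. intros Hlt. assert (Hz : (Int_part r2 + 1 <= Int_part r1)%Z) by lia.
 apply IZR_le in Hz. rewrite plus_IZR in Hz. simpl in Hz. lra. Qed.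

Lemma reg_local h a b del : a < b -> regulated h a b -> 0 < del -> forall t,
  exists (r : posreal) (L R : R),
  (forall x, a <= x <= b -> t < x < t + r -> Rabs (h x - R) < del) /\
  (forall x, a <= x <= b -> t - r < x < t -> Rabs (h x - L) < del).
Proof. intros Hab [Hr Hl] Hd t.
 assert (HR : exists (r : posreal) (R : R), forall x, a <= x <= b -> t < x < t + r -> Rabs (h x - R) < del).
 { destruct (Rlt_le_dec t b) as [Htb|Htb].
   - destruct (Rlt_le_dec t a) as [Hta|Hta].
     + exists (mkposreal (a - t) ltac:(lra)), 0. intros x Hx Hx'. simpl in Hx'. lra.
     + destruct (Hr t (conj Hta Htb)) as [R HR]. destruct (HR del Hd) as [r [Hr0 Hr1]].
       exists (mkposreal r Hr0), R. intros x Hx Hx'. apply Hr1; simpl in *; lra.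
   - exists (mkposreal 1 Rlt_0_1), 0. intros x Hx Hx'. lra. }
 assert (HL : exists (r : posreal) (L : R), forall x, a <= x <= b -> t - r < x < t -> Rabs (h x - L) < del).
 { destruct (Rle_lt_dec t a) as [Hta|Hta].
   - exists (mkposreal 1 Rlt_0_1), 0. intros x Hx Hx'. lra.
   - destruct (Rle_lt_dec t b) as [Htb|Htb].
     + destruct (Hl t (conj Hta Htb)) as [L HL]. destruct (HL del Hd) as [r [Hr0 Hr1]].
       exists (mkposreal r Hr0), L. intros x Hx Hx'. apply Hr1; simpl in *; lra.
     + exists (mkposreal (t - b) ltac:(lra)), 0. intros x Hx Hx'. simpl in Hx'. lra. }
 destruct HR as [r1 [R HR]]. destruct HL as [r2 [L HL]].
 exists (mkposreal (Rmin r1 r2) (Rmin_pos _ _ (cond_pos r1) (cond_pos r2))), L, R. simpl. split.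
 intros x Hx Hx'. apply HR; auto. pose proof (Rmin_l r1 r2). lra.
 intros x Hx Hx'. apply HL; auto. pose proof (Rmin_r r1 r2). lra. Qed.

Lemma fsum_term_le (F : nat -> R) n j : (forall i, 0 <= F i) -> (j < n)%nat -> F j <= fsum F n.
Proof. intros H Hj. induction n. lia. simpl. destruct (Nat.eq_dec j n). subst.
 pose proof (fsum_nonneg F n (fun i _ => H i)). lra. pose proof (H n). assert (F j <= fsum F n) by (apply IHn; lia). lra. Qed.

Lemma reg_approx h a b del : a < b -> regulated h a b -> 0 < del ->
  exists u T, (forall t, a <= t <= b -> Rabs (h t - u t) <= del / 2) /\
  (forall L, srt L -> inab a b L -> VarL u L <= T).
Proof. intros Hab Hreg Hdel.
 destruct (choice (fun t (z : posreal * (R * R)) =>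
   (forall x, a <= x <= b -> t < x < t + fst z -> Rabs (h x - snd (snd z)) < del / 2) /\
   (forall x, a <= x <= b -> t - fst z < x < t -> Rabs (h x - fst (snd z)) < del / 2))) as [Z HZ].
 { intros t. destruct (reg_local h a b (del / 2) Hab Hreg ltac:(lra) t) as [r [L [R [H1 H2]]]].
   exists (r, (L, R)). simpl. auto. }
 set (rad := fun t => fst (Z t)). set (Lv := fun t => fst (snd (Z t))). set (Rv := fun t => snd (snd (Z t))).
 destruct (compactness_value_1d a b (fun t => mkposreal (rad t / 2) ltac:(pose proof (cond_pos (rad t)); lra))) as [d Hd].
 simpl in Hd.
 set (N := S (Z.to_nat (up ((b - a) / d)))).
 assert (HN : (b - a) / INR N < d).
 { unfold N. rewrite S_INR. destruct (archimed ((b - a) / d)) as [H1 _].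
   assert (0 < (b - a) / d) by (apply Rdiv_lt_0_compat; [lra| apply cond_pos]).
   rewrite INR_IZR_INZ, Z2Nat.id. 2:{ apply le_IZR. lra. }
   apply Rlt_div_l. pose proof (cond_pos d). lra.
   assert ((b - a) / d * d = b - a) by (field; pose proof (cond_pos d); lra).
   pose proof (cond_pos d). nra. }
 assert (HN0 : 0 < INR N) by (unfold N; rewrite S_INR; pose proof (pos_INR (Z.to_nat (up ((b - a) / d)))); lra).
 set (w := (b - a) / INR N).
 assert (Hw : 0 < w) by (unfold w; apply Rdiv_lt_0_compat; lra).
 set (y := fun j : nat => a + INR j * w).
 destruct (choice (fun (j : nat) (c : R) => (j < N)%nat -> a <= c <= b /\ Rabs (y j - c) < rad c / 2 /\ d <= rad c / 2)) as [cc Hcc].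
 { intros j. destruct (lt_dec j N) as [Hj|Hj].
   - assert (Hyj : a <= y j <= b).
     { unfold y. split. pose proof (pos_INR j). nra. assert (INR j <= INR N) by (apply le_INR; lia).
       assert (INR N * w = b - a) by (unfold w; field; lra). nra. }
     apply NNPP. intros Hn. apply (Hd (y j) Hyj). intros [t [Ht1 [Ht2 Ht3]]]. apply Hn. exists t. auto.
   - exists a. intros; lia. }
 set (kx := fun x => Nat.min (N - 1) (Z.to_nat (Int_part ((x - a) / w)))).
 assert (Hk_mono : forall x x', x <= x' -> (kx x <= kx x')%nat).
 { intros x x' H. unfold kx. assert (Hq : (x - a) / w <= (x' - a) / w).
   { unfold Rdiv. apply Rmult_le_compat_r. left; apply Rinv_0_lt_compat; auto. lra. }
   apply Int_part_mono in Hq. lia. }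
 assert (HNw : INR N * w = b - a) by (unfold w; field; lra).
 assert (Hk_cell : forall x, a <= x <= b -> (kx x < N)%nat /\ y (kx x) <= x <= y (kx x) + w).
 { intros x Hx. set (z := (x - a) / w).
   assert (Hz : z * w = x - a) by (unfold z; field; lra).
   assert (Hz0 : 0 <= z) by (unfold z; apply Rdiv_le_0_compat; lra).
   assert (HzN : z <= INR N) by (apply Rmult_le_reg_r with w; auto; lra).
   destruct (base_Int_part z) as [Hi1 Hi2].
   assert (Hi0 : (0 <= Int_part z)%Z). { apply le_IZR. assert (-1 < IZR (Int_part z)) by lra.
     apply lt_IZR in H. simpl. apply IZR_le. lia. }
   assert (HiR : INR (Z.to_nat (Int_part z)) = IZR (Int_part z)) by (rewrite INR_IZR_INZ, Z2Nat.id; auto).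
   unfold kx. fold z. assert (HN1 : (1 <= N)%nat) by (unfold N; lia).
   destruct (le_lt_dec (Z.to_nat (Int_part z)) (N - 1)) as [Hle|Hlt].
   - rewrite Nat.min_r by auto. split. lia. unfold y. rewrite HiR.
     split. nra. nra.
   - rewrite Nat.min_l by lia. split. lia.
     assert (INR N <= IZR (Int_part z)). { rewrite <- HiR. apply le_INR. lia. }
     assert (z = INR N) by lra. assert (x = b) by nra. subst x.
     unfold y. rewrite minus_INR by lia. change (INR 1) with 1. rewrite Rmult_minus_distr_r, Rmult_1_l. lra. }
 set (sg := fun x => if Rlt_dec x (cc (kx x)) then O else if Req_EM_T x (cc (kx x)) then 1%nat else 2%nat).
 set (val := fun (j : nat) (s : nat) => match s with O => Lv (cc j) | 1%nat => h (cc j) | _ => Rv (cc j) end).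
 set (u := fun x => val (kx x) (sg x)).
 set (pi := fun x => (3 * kx x + sg x)%nat).
 assert (Hsg : forall x, (sg x < 3)%nat) by (intros x; unfold sg; destruct Rlt_dec; [lia|destruct Req_EM_T; lia]).
 set (B := fsum (fun j => Rabs (Lv (cc j)) + Rabs (h (cc j)) + Rabs (Rv (cc j))) N).
 assert (HB0 : 0 <= B) by (apply fsum_nonneg; intros; pose proof (Rabs_pos (Lv (cc i))); pose proof (Rabs_pos (h (cc i))); pose proof (Rabs_pos (Rv (cc i))); lra).
 assert (HB : forall x, a <= x <= b -> Rabs (u x) <= B).
 { intros x Hx. destruct (Hk_cell x Hx) as [Hk _]. unfold u.
   assert (Rabs (val (kx x) (sg x)) <= Rabs (Lv (cc (kx x))) + Rabs (h (cc (kx x))) + Rabs (Rv (cc (kx x)))).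
   { unfold val. pose proof (Rabs_pos (Lv (cc (kx x)))). pose proof (Rabs_pos (h (cc (kx x)))). pose proof (Rabs_pos (Rv (cc (kx x)))).
     destruct (sg x) as [|[|s]]; lra. }
   eapply Rle_trans. apply H. unfold B.
   apply (fsum_term_le (fun j => Rabs (Lv (cc j)) + Rabs (h (cc j)) + Rabs (Rv (cc j))) N (kx x)); auto.
   intros i; pose proof (Rabs_pos (Lv (cc i))); pose proof (Rabs_pos (h (cc i))); pose proof (Rabs_pos (Rv (cc i))); lra. }
 assert (Hpi_mono : forall x x', a <= x -> x <= x' -> x' <= b -> (pi x <= pi x')%nat).
 { intros x x' H1 H2 H3. unfold pi. pose proof (Hk_mono x x' H2). pose proof (Hsg x). pose proof (Hsg x').
   destruct (Nat.eq_dec (kx x) (kx x')) as [E|E]; [|lia].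
   assert ((sg x <= sg x')%nat). { unfold sg. rewrite <- E. destruct (Rlt_dec x (cc (kx x))); [lia|].
     destruct (Rlt_dec x' (cc (kx x))); [lra|]. destruct (Req_EM_T x (cc (kx x))); destruct (Req_EM_T x' (cc (kx x))); try lia; lra. }
   lia. }
 assert (Hpi_u : forall x x', a <= x <= b -> a <= x' <= b -> pi x = pi x' -> u x = u x').
 { intros x x' _ _ E. unfold pi in E. pose proof (Hsg x). pose proof (Hsg x').
   assert (kx x = kx x' /\ sg x = sg x') as [E1 E2] by lia. unfold u. rewrite E1, E2. auto. }
 exists u, (2 * B * INR (pi b)). split.
 - intros x Hx. destruct (Hk_cell x Hx) as [Hk [Hy1 Hy2]].
   destruct (Hcc (kx x) Hk) as [Hc1 [Hc2 Hc3]]. set (c := cc (kx x)) in *.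
   assert (Hxc : Rabs (x - c) < rad c).
   { replace (x - c) with ((x - y (kx x)) + (y (kx x) - c)) by ring. eapply Rle_lt_trans. apply Rabs_triang.
     rewrite Rabs_right by lra. assert (w < d) by (unfold w in *; lra). lra. }
   destruct (HZ c) as [HZ1 HZ2]. fold (rad c) in HZ1, HZ2. fold (Lv c) in HZ2. fold (Rv c) in HZ1.
   apply Rabs_def2 in Hxc.
   unfold u, val, sg. fold c. destruct (Rlt_dec x c).
   + left. apply HZ2; auto. lra.
   + destruct (Req_EM_T x c). rewrite e, Rminus_diag, Rabs_R0. lra.
     left. apply HZ1; auto. lra.
 - intros L HL1 HL2. destruct L as [|x L]. simpl. pose proof (pos_INR (pi b)). nra.
   pose proof (var_piece u pi a b B Hpi_mono Hpi_u HB x L HL1 HL2).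
   assert (Hlast : In (last (x :: L) x) (x :: L)).
   { clear. revert x. induction L as [|z L IH]; intros x. simpl; auto.
     change (last (x :: z :: L) x) with (last (z :: L) x). rewrite (last_def z L x z). right. apply IH. }
   apply HL2 in Hlast. assert ((pi (last (x :: L) x) <= pi b)%nat) by (apply Hpi_mono; lra).
   apply le_INR in H0. pose proof (pos_INR (pi x)). nra.
Qed.

Definition TV0set (h : R -> R) (a b : R) := fun s => exists (n : nat) (t : nat -> R),
    a <= t O /\ t n <= b /\ (forall i, (i < n)%nat -> t i < t (S i)) /\
    s = fsum (fun i => Rabs (h (t (S i)) - h (t i))) n.

Lemma chain_in a b n (t : nat -> R) : a <= t O -> t n <= b -> (forall i, (i < n)%nat -> t i < t (S i)) ->
  forall i, (i <= n)%nat -> a <= t i <= b.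
Proof. intros H0 Hn Hs. assert (Hm : forall i j, (i <= j <= n)%nat -> t i <= t j).
 { intros i j [Hij Hjn]. induction Hij. lra. specialize (Hs m ltac:(lia)). specialize (IHHij ltac:(lia)). lra. }
 intros i Hi. split. pose proof (Hm O i ltac:(lia)). lra. pose proof (Hm i n ltac:(lia)). lra. Qed.

Lemma TV0_ext h1 h2 a b : (forall x, a <= x <= b -> h1 x = h2 x) -> TV0 h1 a b = TV0 h2 a b.
Proof. intros H. unfold TV0. apply Lub_Rbar_eqset. intros s. split; intros [n [t [H1 [H2 [H3 H4]]]]];
 exists n, t; repeat split; auto; rewrite H4; apply fsum_ext; intros i Hi;
 pose proof (chain_in a b n t H1 H2 H3 i ltac:(lia)); pose proof (chain_in a b n t H1 H2 H3 (S i) ltac:(lia));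
 rewrite !H; auto. Qed.

Lemma TV0_const c a b : a <= b -> TV0 (fun _ => c) a b = Finite 0.
Proof. intros Hab. unfold TV0. apply is_lub_Rbar_unique. split.
 - intros s [n [t [H1 [H2 [H3 H4]]]]]. subst s. simpl. rewrite (fsum_ext _ (fun _ => 0)).
   clear. induction n; simpl; lra. intros; rewrite Rminus_diag, Rabs_R0; auto.
 - intros bb Hb. apply Hb. exists O, (fun _ => a). simpl. repeat split; auto; try lra. intros; lia. Qed.

Lemma TV0_const_on h a b : a <= b -> (forall x, a <= x <= b -> h x = h a) -> TV0 h a b = Finite 0.
Proof. intros Hab H. rewrite (TV0_ext h (fun _ => h a)); auto. apply TV0_const; auto. Qed.

Definition BV (h : R -> R) a b := exists V, TV0 h a b = Finite V.

Lemma TV_zero_BV h a b : a <= b -> TV h a b 0 <> p_infty -> BV h a b.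
Proof. intros Hab Hne. apply NNPP. intros Hn. apply Hne. rewrite TV_eq.
 destruct (Glb_Rbar_correct (TVset h a b 0)) as [_ H2].
 assert (Rbar_le p_infty (Glb_Rbar (TVset h a b 0))).
 { apply H2. intros s [u [Hu1 Hu2]]. exfalso. apply Hn. exists s. rewrite <- Hu2. apply TV0_ext.
   intros x Hx. specialize (Hu1 x Hx). replace (0 / 2) with 0 in Hu1 by field.
   assert (Hz : Rabs (h x - u x) = 0) by (pose proof (Rabs_pos (h x - u x)); lra).
   apply Rabs_eq_0 in Hz. lra. }
 destruct (Glb_Rbar (TVset h a b 0)); simpl in H; try contradiction; auto. Qed.

Lemma mult_fin_not_inf X T P : Rbar_lt 0 X -> Rbar_mult X T = Finite P -> T <> p_infty.
Proof. intros HX H E. subst T. destruct X as [x| |]; simpl in HX; try contradiction.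
 - unfold Rbar_mult, Rbar_mult' in H. destruct (Rle_dec 0 x); [|lra].
   destruct (Rle_lt_or_eq_dec 0 x r); [discriminate|lra].
 - discriminate. Qed.

Lemma sup0_const h a b c : (forall t, a <= t <= b -> Rbar_le (Rabs (h t - h c)) 0) -> forall t, a <= t <= b -> h t = h c.
Proof. intros H t Ht. specialize (H t Ht). simpl in H. pose proof (Rabs_pos (h t - h c)).
 assert (Rabs (h t - h c) = 0) by lra. apply Rabs_eq_0 in H1. lra. Qed.

Lemma zero_S a b f g eta theta e d :
  a < b -> nonincr_to_zero eta -> nonincr_to_zero theta ->
  (forall k, Rbar_mult (shift_seq (sup_dev f a b a) eta k) (TV g a b (theta k)) = Finite (e k)) ->
  (forall k, Rbar_mult (Finite (theta k)) (TV f a b (eta k)) = Finite (d k)) ->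
  (forall k, 0 < eta k /\ 0 < theta k) \/ BV f a b \/ BV g a b.
Proof. intros Hab [Hen _] [Htn _] He Hd.
 assert (Hz : forall L, theta L = 0 -> BV f a b \/ BV g a b).
 { induction L; intros HL.
   - specialize (He O). rewrite HL in He. simpl in He.
     pose proof (sup_dev_nonneg f a b a ltac:(lra)) as Hs.
     destruct (sup_dev f a b a) as [E| |] eqn:ES; simpl in Hs; try contradiction.
     + destruct (Req_dec E 0).
       * left. exists 0. apply TV0_const_on. lra. apply sup0_const.
         intros t Ht. pose proof (sup_dev_ge f a b a t Ht). rewrite ES, H in H0. auto.
       * right. apply TV_zero_BV. lra. apply (mult_fin_not_inf (Finite E) _ (e O)); auto. simpl; lra.
     + right. apply TV_zero_BV. lra. apply (mult_fin_not_inf p_infty _ (e O)); auto. simpl; auto.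
   - specialize (He (S L)). rewrite HL in He. simpl in He.
     destruct (Req_dec (eta L) 0) as [E|E].
     + specialize (Hd L). rewrite E in Hd. destruct (Req_dec (theta L) 0) as [E'|E'].
       * apply IHL; auto.
       * left. apply TV_zero_BV. lra. apply (mult_fin_not_inf (Finite (theta L)) _ (d L)); auto.
         simpl. specialize (Htn L). lra.
     + right. apply TV_zero_BV. lra. apply (mult_fin_not_inf (Finite (eta L)) _ (e (S L))); auto.
       simpl. specialize (Hen L). lra. }
 destruct (classic (forall k, 0 < eta k /\ 0 < theta k)) as [H|H]. left; auto. right.
 apply not_all_ex_not in H. destruct H as [k Hk].
 destruct (Req_dec (theta k) 0) as [E|E]. apply (Hz k E).
 assert (eta k = 0). { specialize (Hen k). specialize (Htn k). apply NNPP. intros Hn. apply Hk. split; lra. }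
 specialize (Hd k). rewrite H in Hd. left. apply TV_zero_BV. lra.
 apply (mult_fin_not_inf (Finite (theta k)) _ (d k)); auto. simpl. specialize (Htn k). lra. Qed.

Lemma zero_St a b f g eta theta e d :
  a < b -> nonincr_to_zero eta -> nonincr_to_zero theta ->
  (forall k, Rbar_mult (shift_seq (sup_dev g a b b) theta k) (TV f a b (eta k)) = Finite (e k)) ->
  (forall k, Rbar_mult (Finite (eta k)) (TV g a b (theta k)) = Finite (d k)) ->
  (forall k, 0 < eta k /\ 0 < theta k) \/ BV f a b \/ BV g a b.
Proof. intros Hab [Hen _] [Htn _] He Hd.
 assert (Hz : forall L, eta L = 0 -> BV f a b \/ BV g a b).
 { induction L; intros HL.
   - specialize (He O). rewrite HL in He. simpl in He.
     pose proof (sup_dev_nonneg g a b b ltac:(lra)) as Hs.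
     destruct (sup_dev g a b b) as [E| |] eqn:ES; simpl in Hs; try contradiction.
     + destruct (Req_dec E 0).
       * right. exists 0. rewrite (TV0_ext g (fun _ => g b)). apply TV0_const. lra. apply sup0_const.
         intros t Ht. pose proof (sup_dev_ge g a b b t Ht). rewrite ES, H in H0. auto.
       * left. apply TV_zero_BV. lra. apply (mult_fin_not_inf (Finite E) _ (e O)); auto. simpl; lra.
     + left. apply TV_zero_BV. lra. apply (mult_fin_not_inf p_infty _ (e O)); auto. simpl; auto.
   - specialize (He (S L)). rewrite HL in He. simpl in He.
     destruct (Req_dec (theta L) 0) as [E|E].
     + specialize (Hd L). rewrite E in Hd. destruct (Req_dec (eta L) 0) as [E'|E'].
       * apply IHL; auto.
       * right. apply TV_zero_BV. lra. apply (mult_fin_not_inf (Finite (eta L)) _ (d L)); auto.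
         simpl. specialize (Hen L). lra.
     + left. apply TV_zero_BV. lra. apply (mult_fin_not_inf (Finite (theta L)) _ (e (S L))); auto.
       simpl. specialize (Htn L). lra. }
 destruct (classic (forall k, 0 < eta k /\ 0 < theta k)) as [H|H]. left; auto. right.
 apply not_all_ex_not in H. destruct H as [k Hk].
 destruct (Req_dec (eta k) 0) as [E|E]. apply (Hz k E).
 assert (theta k = 0). { specialize (Hen k). specialize (Htn k). apply NNPP. intros Hn. apply Hk. split; lra. }
 specialize (Hd k). rewrite H in Hd. right. apply TV_zero_BV. lra.
 apply (mult_fin_not_inf (Finite (eta k)) _ (d k)); auto. simpl. specialize (Hen k). lra. Qed.

Lemma AP_fBV f g a b delta : a < b -> regulated g a b -> BV f a b -> 0 < delta -> APk f g a b delta.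
Proof. intros Hab Hg [V HV] Hd.
 assert (HV0 : 0 <= V). { pose proof (TV0_ge0 f a b ltac:(lra)). rewrite HV in H. auto. }
 set (y := delta / (V + 1)).
 assert (Hy : 0 < y) by (unfold y; apply Rdiv_lt_0_compat; lra).
 destruct (reg_approx g a b y Hab Hg Hy) as [u [Tu [Hu1 Hu2]]].
 exists f, u, 0, y, V, Tu. split. lra. split. lra. split.
 intros; rewrite Rminus_diag, Rabs_R0; lra. split. auto. split.
 intros L H1 H2. pose proof (Var_le_TV0 f a b L ltac:(lra) H1 H2). rewrite HV in H. auto.
 split. auto. split.
 - rewrite Rmult_0_l, Rplus_0_l. unfold y. apply Rle_trans with (delta / (V + 1) * (V + 1)).
   apply Rmult_le_compat_l. left; exact Hy. lra. right. field. lra.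
 - intros l p xi cs Hf. rewrite (fsum_ext _ (fun _ => 0)). rewrite fsum_const. lra.
   intros i Hi. rewrite Ec_lin1. rewrite Rminus_diag, Rabs_R0. auto. Qed.

Lemma AP_gBV f g a b delta : a < b -> regulated f a b -> BV g a b -> 0 < delta -> APk f g a b delta.
Proof. intros Hab Hf [V HV] Hd.
 assert (HV0 : 0 <= V). { pose proof (TV0_ge0 g a b ltac:(lra)). rewrite HV in H. auto. }
 set (x := delta / (V + 1)).
 assert (Hx : 0 < x) by (unfold x; apply Rdiv_lt_0_compat; lra).
 destruct (reg_approx f a b x Hab Hf Hx) as [psi [Tp [Hp1 Hp2]]].
 exists psi, g, x, 0, Tp, V. split. lra. split. lra. split. auto. split.
 intros; rewrite Rminus_diag, Rabs_R0; lra. split. auto. split.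
 intros L H1 H2. pose proof (Var_le_TV0 g a b L ltac:(lra) H1 H2). rewrite HV in H. auto. split.
 - rewrite Rmult_0_l, Rplus_0_r. unfold x. apply Rle_trans with (delta / (V + 1) * (V + 1)).
   apply Rmult_le_compat_l. left; exact Hx. lra. right. field. lra.
 - intros l p xi cs Hf'. rewrite (fsum_ext _ (fun _ => 0)). rewrite fsum_const. lra.
   intros i Hi. rewrite Ec_lin2. rewrite Rminus_diag, Rabs_R0. auto. Qed.

Lemma compact_osc f g a b : no_common_discontinuity f g a b ->
  forall eps0, 0 < eps0 -> exists rho, 0 < rho /\ compactP f g a b eps0 rho.
Proof. intros Hnc eps0 He.
 destruct (choice (fun t (r : posreal) => a <= t <= b ->
   (forall x, a <= x <= b -> Rabs (x - t) < r -> Rabs (f x - f t) < eps0 / 2) \/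
   (forall x, a <= x <= b -> Rabs (x - t) < r -> Rabs (g x - g t) < eps0 / 2))) as [rad Hrad].
 { intros t. destruct (classic (a <= t <= b)) as [Ht|Ht].
   - destruct (Hnc t Ht) as [Hc|Hc]; destruct (Hc (eps0 / 2) ltac:(lra)) as [r [Hr0 Hr]];
     exists (mkposreal r Hr0); intros _; [left|right]; intros x Hx Hxt; apply Hr; auto.
   - exists (mkposreal 1 Rlt_0_1). intros; contradiction. }
 destruct (compactness_value_1d a b (fun t => mkposreal (rad t / 2) ltac:(pose proof (cond_pos (rad t)); lra))) as [d Hd].
 simpl in Hd. exists d. split. apply cond_pos.
 intros al be H1 H2 H3 H4. apply NNPP. intros Hn. apply (Hd al ltac:(lra)). intros [t [Ht [Hat Hdt]]]. apply Hn.
 assert (Hx : forall x, al <= x <= be -> Rabs (x - t) < rad t).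
 { intros x Hx. replace (x - t) with ((x - al) + (al - t)) by ring. eapply Rle_lt_trans. apply Rabs_triang.
   rewrite Rabs_right by lra. lra. }
 destruct (Hrad t Ht) as [Hf|Hg]; [left|right]; intros x y Hx' Hy';
 pose proof (Hx x Hx'); pose proof (Hx y Hy').
 - pose proof (Hf x ltac:(lra) H). pose proof (Hf y ltac:(lra) H0).
   replace (f x - f y) with ((f x - f t) + - (f y - f t)) by ring. eapply Rle_trans. apply Rabs_triang.
   rewrite Rabs_Ropp. lra.
 - pose proof (Hg x ltac:(lra) H). pose proof (Hg y ltac:(lra) H0).
   replace (g x - g y) with ((g x - g t) + - (g y - g t)) by ring. eapply Rle_trans. apply Rabs_triang.
   rewrite Rabs_Ropp. lra. Qed.

Lemma wsum_nonneg c h a b d : a <= b -> (forall k, Rbar_le 0 (c k)) -> Rbar_le 0 (wsum c h a b d).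
Proof. intros Hab Hc. unfold wsum, Rbar_series. eapply Rbar_le_trans; [|apply (Sup_seq_minor_le _ 0 O)].
 simpl; lra. simpl. lra. Qed.

Lemma AP_all a b f g eta theta :
  a < b -> regulated f a b -> regulated g a b -> nonincr_to_zero eta -> nonincr_to_zero theta ->
  (Rbar_lt (Rbar_plus (wsum (shift_seq (sup_dev f a b a) eta) g a b theta)
                     (wsum (fun k => Finite (theta k)) f a b eta)) p_infty \/
   Rbar_lt (Rbar_plus (wsum (shift_seq (sup_dev g a b b) theta) f a b eta)
                      (wsum (fun k => Finite (eta k)) g a b theta)) p_infty) ->
  forall delta, 0 < delta -> APk f g a b delta.
Proof. intros Hab Hf Hg Heta Hth HS delta Hd.
 pose proof Heta as [Hen [Hed Hel]]. pose proof Hth as [Htn [Htd Htl]].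
 destruct HS as [HS|HS].
 - assert (H1 : Rbar_le 0 (sup_dev f a b a)) by (apply sup_dev_nonneg; lra).
   destruct (Rbar_plus_fin _ _ (wsum_nonneg _ g a b theta ltac:(lra) (fun k => shift_nonneg _ eta k H1 Hen))
     (wsum_nonneg (fun k => Finite (theta k)) f a b eta ltac:(lra) (fun k => Htn k)) HS) as [W1 [W2 [E1 [E2 _]]]].
   destruct (wsum_props _ g a b theta W1 ltac:(lra) (fun k => shift_nonneg _ eta k H1 Hen) E1) as [e [He _]].
   destruct (wsum_props (fun k => Finite (theta k)) f a b eta W2 ltac:(lra) (fun k => Htn k) E2) as [d [Hdd _]].
   destruct (zero_S a b f g eta theta e d Hab Heta Hth He Hdd) as [Hp|[HB|HB]].
   + apply (tailS a b f g eta theta W1 W2); auto; intros k; apply Hp.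
   + apply AP_fBV; auto.
   + apply AP_gBV; auto.
 - assert (H1 : Rbar_le 0 (sup_dev g a b b)) by (apply sup_dev_nonneg; lra).
   destruct (Rbar_plus_fin _ _ (wsum_nonneg _ f a b eta ltac:(lra) (fun k => shift_nonneg _ theta k H1 Htn))
     (wsum_nonneg (fun k => Finite (eta k)) g a b theta ltac:(lra) (fun k => Hen k)) HS) as [W1 [W2 [E1 [E2 _]]]].
   destruct (wsum_props _ f a b eta W1 ltac:(lra) (fun k => shift_nonneg _ theta k H1 Htn) E1) as [e [He _]].
   destruct (wsum_props (fun k => Finite (eta k)) g a b theta W2 ltac:(lra) (fun k => Hen k) E2) as [d [Hdd _]].
   destruct (zero_St a b f g eta theta e d Hab Heta Hth He Hdd) as [Hp|[HB|HB]].
   + apply (tailSt a b f g eta theta W1 W2); auto; intros k; apply Hp.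
   + apply AP_fBV; auto.
   + apply AP_gBV; auto. Qed.

Lemma cauchy_fam a b f g : a < b -> no_common_discontinuity f g a b -> (forall delta, 0 < delta -> APk f g a b delta) ->
  forall eps, 0 < eps -> exists rho, 0 < rho /\ forall l p xi cs, famP a b l p xi cs ->
  (forall i, (i < l)%nat -> p (S i) - p i < rho) ->
  fsum (fun i => Rabs (Ec f g (xi i) (p i) (cs i))) l <= eps.
Proof. intros Hab Hnc HAP eps He.
 destruct (HAP (eps / 3) ltac:(lra)) as [psi [u [x [y [Tp [Tu [Hx [Hy [H1 [H2 [H3 [H4 [H5 H6]]]]]]]]]]]]].
 assert (HTp : 0 <= Tp). { pose proof (H3 [a] I). assert (inab a b [a]) by (intros z [Hz|[]]; lra).
   specialize (H H0). simpl in H. auto. }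
 assert (HTu : 0 <= Tu). { pose proof (H4 [a] I). assert (inab a b [a]) by (intros z [Hz|[]]; lra).
   specialize (H H0). simpl in H. auto. }
 set (eps0 := eps / (3 * (Tu + Tp + 1))).
 assert (He0 : 0 < eps0) by (unfold eps0; apply Rdiv_lt_0_compat; lra).
 destruct (compact_osc f g a b Hnc eps0 He0) as [rho [Hrho Hcp]].
 exists rho. split; auto. intros l p xi cs Hf Hm.
 eapply Rle_trans. apply (FL a b f g psi u x y Tp Tu eps0 rho l p xi cs); auto. lra.
 specialize (H6 l p xi cs Hf).
 assert (eps0 * (Tu + Tp) <= eps / 3).
 { unfold eps0. apply Rle_trans with (eps / (3 * (Tu + Tp + 1)) * (Tu + Tp + 1)).
   apply Rmult_le_compat_l. left; exact He0. lra. right. field. lra. }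
 nra. Qed.

Definition mkcells (t c : nat -> R) (s n : nat) := map (fun j => (t j, c (S j))) (seq s n).

Lemma mkcells_props h w xi t c s n :
  Ec h w xi (c s) (mkcells t c s n) =
    fsum (fun j => (h (t (s + j)%nat) - h xi) * (w (c (S (s + j))) - w (c (s + j)%nat))) n /\
  lastr (c s) (mkcells t c s n) = c (s + n)%nat /\
  ((forall j, (s <= j < s + n)%nat -> c j <= t j <= c (S j)) -> vcells (c s) (mkcells t c s n)).
Proof. revert s. induction n; intros s. simpl. rewrite Nat.add_0_r. split; auto.
 unfold mkcells. simpl seq. simpl map. destruct (IHn (S s)) as [I1 [I2 I3]]. unfold mkcells in *.
 split; [|split].
 - cbn [Ec]. rewrite I1. rewrite fsum_shift. rewrite Nat.add_0_r. f_equal. apply fsum_ext. intros.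
   replace (S s + i)%nat with (s + S i)%nat by lia. reflexivity.
 - simpl. rewrite I2. f_equal. lia.
 - intros H. simpl. split. apply H. lia. apply I3. intros j Hj. apply H. lia. Qed.

Definition clp (p : nat -> R) (i : nat) (x : R) := Rmin (Rmax x (p i)) (p (S i)).

Lemma clp_mono p i x y : p i <= p (S i) -> x <= y -> clp p i x <= clp p i y.
Proof. intros H Hxy. unfold clp, Rmin, Rmax. repeat destruct Rle_dec; lra. Qed.

Lemma clp_range p i x : p i <= p (S i) -> p i <= clp p i x <= p (S i).
Proof. intros H. unfold clp, Rmin, Rmax. repeat destruct Rle_dec; lra. Qed.

Lemma clamp3 x lo hi : lo <= hi -> (x <= lo /\ Rmin (Rmax x lo) hi = lo) \/
  (lo <= x <= hi /\ Rmin (Rmax x lo) hi = x) \/ (hi <= x /\ Rmin (Rmax x lo) hi = hi).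
Proof. intros H. unfold Rmin, Rmax. destruct (Rle_dec x lo).
 - left. split; auto. destruct (Rle_dec lo hi); lra.
 - destruct (Rle_dec x hi). right; left; split; lra. right; right; split; lra. Qed.

Lemma clamp_cases P P' Q Q' : P <= P' -> Q <= Q' ->
  let cl := fun x => Rmin (Rmax x P) P' in let cl' := fun x => Rmin (Rmax x Q) Q' in
  (cl Q = cl' P /\ cl Q' = cl' P') \/ (cl Q = cl Q' /\ cl' P = cl' P').
Proof. intros H1 H2 cl cl'. unfold cl, cl'.
 destruct (clamp3 Q P P' H1) as [[A1 E1]|[[A1 E1]|[A1 E1]]];
 destruct (clamp3 Q' P P' H1) as [[A2 E2]|[[A2 E2]|[A2 E2]]];
 destruct (clamp3 P Q Q' H2) as [[A3 E3]|[[A3 E3]|[A3 E3]]];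
 destruct (clamp3 P' Q Q' H2) as [[A4 E4]|[[A4 E4]|[A4 E4]]];
 rewrite E1, E2, E3, E4; first [left; split; lra | right; split; lra]. Qed.

Definition cellsPQ (p q : nat -> R) (l' : nat) (i : nat) := mkcells (fun j => clp p i (q j)) (fun j => clp p i (q j)) O l'.

Lemma RS_as_Ec f g l p nu xi :
  RS_sum f g l p nu - f xi * (g (p l) - g (p O)) = Ec f g xi (p O) (mkcells (fun j => nu (S j)) p O l).
Proof. destruct (mkcells_props f g xi (fun j => nu (S j)) p O l) as [H _]. rewrite H.
 unfold RS_sum. rewrite <- (fsum_telescope (fun i => g (p i)) l). rewrite <- fsum_scal, <- fsum_minus.
 apply fsum_ext. intros i _. simpl. ring. Qed.

Definition strictP (a b : R) l (p : nat -> R) := p O = a /\ p l = b /\ forall i, (i < l)%nat -> p i < p (S i).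
Definition tagsP l (p nu : nat -> R) := forall i, (i < l)%nat -> p i <= nu (S i) <= p (S i).

Lemma strict_partP a b l p : strictP a b l p -> partP a b l p.
Proof. intros [H1 [H2 H3]]. split; auto. split; auto. intros i Hi. specialize (H3 i Hi). lra. Qed.

Lemma cellsP_props a b l p l' q i : strictP a b l p -> strictP a b l' q -> (i < l)%nat ->
  vcells (p i) (cellsPQ p q l' i) /\ lastr (p i) (cellsPQ p q l' i) = p (S i).
Proof. intros Hp Hq Hi. pose proof (strict_partP _ _ _ _ Hp) as Hp'. pose proof (strict_partP _ _ _ _ Hq) as Hq'.
 pose proof (partP_in a b l p i Hp' ltac:(lia)). pose proof (partP_in a b l p (S i) Hp' ltac:(lia)).
 assert (Hpi : p i <= p (S i)) by (apply (proj2 (proj2 Hp')); auto).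
 assert (E0 : clp p i (q O) = p i).
 { destruct Hq as [Hq0 _]. rewrite Hq0. unfold clp, Rmin, Rmax. repeat destruct Rle_dec; lra. }
 assert (E1 : clp p i (q l') = p (S i)).
 { destruct Hq as [_ [Hql _]]. rewrite Hql. unfold clp, Rmin, Rmax. repeat destruct Rle_dec; lra. }
 destruct (mkcells_props (fun x => x) (fun x => x) 0 (fun j => clp p i (q j)) (fun j => clp p i (q j)) O l') as [_ [H2 H3]].
 unfold cellsPQ. rewrite E0 in H2, H3. split.
 - apply H3. intros j Hj. split. lra. apply clp_mono; auto. apply (proj2 (proj2 Hq')). lia.
 - rewrite H2. simpl. auto.
Qed.

Lemma Ec_cellsPQ a b f g l p l' q i xi : strictP a b l p -> strictP a b l' q -> (i < l)%nat ->
  Ec f g xi (p i) (cellsPQ p q l' i) =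
  fsum (fun j => f (clp p i (q j)) * (g (clp p i (q (S j))) - g (clp p i (q j)))) l' - f xi * (g (p (S i)) - g (p i)).
Proof. intros Hp Hq Hi. pose proof (strict_partP _ _ _ _ Hp) as Hp'.
 pose proof (partP_in a b l p i Hp' ltac:(lia)). pose proof (partP_in a b l p (S i) Hp' ltac:(lia)).
 assert (Hpi : p i <= p (S i)) by (apply (proj2 (proj2 Hp')); auto).
 assert (E0 : clp p i (q O) = p i).
 { destruct Hq as [Hq0 _]. rewrite Hq0. unfold clp, Rmin, Rmax. repeat destruct Rle_dec; lra. }
 assert (E1 : clp p i (q l') = p (S i)).
 { destruct Hq as [_ [Hql _]]. rewrite Hql. unfold clp, Rmin, Rmax. repeat destruct Rle_dec; lra. }
 destruct (mkcells_props f g xi (fun j => clp p i (q j)) (fun j => clp p i (q j)) O l') as [H1 _].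
 unfold cellsPQ. rewrite <- E0 at 1. rewrite H1. simpl.
 rewrite <- E1, <- E0. rewrite <- (fsum_telescope (fun j => g (clp p i (q j))) l').
 rewrite <- fsum_scal, <- fsum_minus. apply fsum_ext. intros j _. ring. Qed.

Lemma two_part a b f g l p nu l' q mu : strictP a b l p -> strictP a b l' q ->
  RS_sum f g l p nu - RS_sum f g l' q mu =
  fsum (fun j => Ec f g (mu (S j)) (q j) (cellsPQ q p l j)) l' - fsum (fun i => Ec f g (nu (S i)) (p i) (cellsPQ p q l' i)) l.
Proof. intros Hp Hq.
 rewrite (fsum_ext (fun j => Ec f g (mu (S j)) (q j) (cellsPQ q p l j))
   (fun j => fsum (fun i => f (clp q j (p i)) * (g (clp q j (p (S i))) - g (clp q j (p i)))) l - f (mu (S j)) * (g (q (S j)) - g (q j))) l')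
   by (intros j Hj; apply (Ec_cellsPQ a b f g l' q l p j); auto).
 rewrite (fsum_ext (fun i => Ec f g (nu (S i)) (p i) (cellsPQ p q l' i))
   (fun i => fsum (fun j => f (clp p i (q j)) * (g (clp p i (q (S j))) - g (clp p i (q j)))) l' - f (nu (S i)) * (g (p (S i)) - g (p i))) l)
   by (intros i Hi; apply (Ec_cellsPQ a b f g l p l' q i); auto).
 rewrite !fsum_minus. unfold RS_sum.
 assert (E : fsum (fun i => fsum (fun j => f (clp p i (q j)) * (g (clp p i (q (S j))) - g (clp p i (q j)))) l') l =
   fsum (fun j => fsum (fun i => f (clp q j (p i)) * (g (clp q j (p (S i))) - g (clp q j (p i)))) l) l').
 { rewrite fsum_swap. apply fsum_ext. intros j Hj. apply fsum_ext. intros i Hi.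
   assert (H1 : p i <= p (S i)) by (destruct Hp as [_ [_ H]]; specialize (H i Hi); lra).
   assert (H2 : q j <= q (S j)) by (destruct Hq as [_ [_ H]]; specialize (H j Hj); lra).
   destruct (clamp_cases (p i) (p (S i)) (q j) (q (S j)) H1 H2) as [[E1 E2]|[E1 E2]]; unfold clp; simpl in E1, E2.
   - rewrite E1, E2. reflexivity.
   - rewrite E1, E2, !Rminus_diag. ring. }
 rewrite E. ring. Qed.

Lemma RS_cauchy a b f g : a < b -> no_common_discontinuity f g a b -> (forall delta, 0 < delta -> APk f g a b delta) ->
  forall eps, 0 < eps -> exists rho, 0 < rho /\ forall l p nu l' q mu,
  strictP a b l p -> strictP a b l' q -> tagsP l p nu -> tagsP l' q mu ->
  (forall i, (i < l)%nat -> p (S i) - p i < rho) -> (forall j, (j < l')%nat -> q (S j) - q j < rho) ->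
  Rabs (RS_sum f g l p nu - RS_sum f g l' q mu) <= eps.
Proof. intros Hab Hnc HAP eps He.
 destruct (cauchy_fam a b f g Hab Hnc HAP (eps / 2) ltac:(lra)) as [rho [Hrho H]].
 exists rho. split; auto. intros l p nu l' q mu Hp Hq Hnu Hmu Hmp Hmq.
 rewrite (two_part a b f g l p nu l' q mu Hp Hq).
 assert (F1 : famP a b l p (fun i => nu (S i)) (cellsPQ p q l')).
 { split. apply strict_partP; auto. intros i Hi. destruct (cellsP_props a b l p l' q i Hp Hq Hi). auto. }
 assert (F2 : famP a b l' q (fun j => mu (S j)) (cellsPQ q p l)).
 { split. apply strict_partP; auto. intros j Hj. destruct (cellsP_props a b l' q l p j Hq Hp Hj). auto. }
 pose proof (H _ _ _ _ F1 Hmp). pose proof (H _ _ _ _ F2 Hmq).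
 unfold Rminus. eapply Rle_trans. apply Rabs_triang. rewrite Rabs_Ropp.
 pose proof (fsum_abs (fun j => Ec f g (mu (S j)) (q j) (cellsPQ q p l j)) l').
 pose proof (fsum_abs (fun i => Ec f g (nu (S i)) (p i) (cellsPQ p q l' i)) l). simpl in *. lra. Qed.

Definition upt (a b : R) (n : nat) (j : nat) := a + INR j * ((b - a) / INR (S n)).
Definition upnu (a b : R) (n : nat) (k : nat) := upt a b n (pred k).

Lemma up_props a b n : a < b -> strictP a b (S n) (upt a b n) /\ tagsP (S n) (upt a b n) (upnu a b n) /\
  forall i, upt a b n (S i) - upt a b n i = (b - a) / INR (S n).
Proof. intros Hab. assert (HN : 0 < INR (S n)) by (apply lt_0_INR; lia).
 assert (Hw : 0 < (b - a) / INR (S n)) by (apply Rdiv_lt_0_compat; lra).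
 assert (Hd : forall i, upt a b n (S i) - upt a b n i = (b - a) / INR (S n)).
 { intros i. unfold upt. rewrite S_INR. ring. }
 split; [|split; auto].
 - split. unfold upt. simpl. ring. split. unfold upt. field. lra.
   intros i _. specialize (Hd i). lra.
 - intros i _. unfold upnu. simpl. specialize (Hd i). lra. Qed.

Lemma mesh_small a b rho : a < b -> 0 < rho -> exists N, forall n, (N <= n)%nat -> (b - a) / INR (S n) < rho.
Proof. intros Hab Hr. destruct (archimed ((b - a) / rho)) as [H1 _].
 exists (Z.to_nat (Rdefinitions.up ((b - a) / rho))). intros n Hn.
 assert (0 < (b - a) / rho) by (apply Rdiv_lt_0_compat; lra).
 assert (IZR (Rdefinitions.up ((b - a) / rho)) <= INR n).
 { rewrite <- (Z2Nat.id (Rdefinitions.up ((b - a) / rho))). rewrite <- INR_IZR_INZ. apply le_INR. lia.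
   apply le_IZR. lra. }
 assert (HN : 0 < INR (S n)) by (apply lt_0_INR; lia). rewrite S_INR in *.
 apply Rlt_div_l. lra. assert ((b - a) / rho * rho = b - a) by (field; lra). nra. Qed.

Lemma RSn_Ec a b f g xi n : a < b ->
  let p := upt a b n in let cs := mkcells (fun j => upnu a b n (S j)) p O (S n) in
  RS_sum f g (S n) p (upnu a b n) - f xi * (g b - g a) = Ec f g xi a cs /\ vcells a cs /\ lastr a cs = b.
Proof. intros Hab p cs. destruct (up_props a b n Hab) as [[H0 [H1 H2]] [Ht _]].
 fold p in H0, H1, H2, Ht.
 destruct (mkcells_props f g xi (fun j => upnu a b n (S j)) p O (S n)) as [_ [L V]].
 rewrite H0 in L, V. fold cs in L, V. split; [|split].
 - assert (E : RS_sum f g (S n) p (upnu a b n) - f xi * (g b - g a) =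
     RS_sum f g (S n) p (upnu a b n) - f xi * (g (p (S n)) - g (p O))) by (rewrite H0, H1; reflexivity).
   rewrite E, RS_as_Ec, H0. reflexivity.
 - apply V. intros j Hj. apply Ht. lia.
 - rewrite L. simpl. auto. Qed.

Theorem corollary1 (a b : R) (f g : R -> R) (xi : R) (eta theta : nat -> R) :
  a < b ->
  regulated f a b -> regulated g a b ->
  no_common_discontinuity f g a b ->
  a <= xi <= b ->
  nonincr_to_zero eta -> nonincr_to_zero theta ->
  let eta_m1 := sup_dev f a b a in
  let theta_m1 := sup_dev g a b b in
  let S := Rbar_plus (wsum (shift_seq eta_m1 eta) g a b theta)
                     (wsum (fun k => Finite (theta k)) f a b eta) in
  let St := Rbar_plus (wsum (shift_seq theta_m1 theta) f a b eta)
                      (wsum (fun k => Finite (eta k)) g a b theta) in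
  (Rbar_lt S p_infty \/ Rbar_lt St p_infty) ->
  exists I : R, is_RS_integral f g a b I /\
    Rbar_le (Finite (Rabs (I - f xi * (g b - g a))))
            (Rbar_mult (Finite 2) (Rbar_min S St)).
Proof.
 intros Hab Hf Hg Hnc Hxi Heta Hth em1 tm1 Sv Stv HS.
 pose proof Heta as [Hen [Hed Hel]]. pose proof Hth as [Htn [Htd Htl]].
 assert (HAP := AP_all a b f g eta theta Hab Hf Hg Heta Hth HS).
 set (RSn := fun n => RS_sum f g (Datatypes.S n) (upt a b n) (upnu a b n)).
 assert (Hcc : Cauchy_crit RSn).
 { intros eps He. destruct (RS_cauchy a b f g Hab Hnc HAP (eps / 2) ltac:(lra)) as [rho [Hrho H]].
   destruct (mesh_small a b rho Hab Hrho) as [N HN]. exists N. intros n m Hn Hm.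
   destruct (up_props a b n Hab) as [P1 [P2 P3]]. destruct (up_props a b m Hab) as [Q1 [Q2 Q3]].
   unfold Rdist, RSn. eapply Rle_lt_trans. apply H; auto.
   intros i _. rewrite P3. apply HN. lia. intros i _. rewrite Q3. apply HN. lia. lra. }
 destruct (Rcomplete.R_complete RSn Hcc) as [I HI].
 exists I. split.
 - intros eps He. destruct (RS_cauchy a b f g Hab Hnc HAP (eps / 2) ltac:(lra)) as [rho [Hrho H]].
   exists rho. split; auto. intros l p nu Hp0 Hpl Hinc Hmesh Htag.
   destruct (HI (eps / 2) ltac:(lra)) as [N1 HN1]. destruct (mesh_small a b rho Hab Hrho) as [N2 HN2].
   set (n := Nat.max N1 N2). destruct (up_props a b n Hab) as [P1 [P2 P3]].
   assert (Hc : Rabs (RS_sum f g l p nu - RSn n) <= eps / 2).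
   { apply H; auto. split; auto. intros i _. rewrite P3. apply HN2. unfold n; lia. }
   specialize (HN1 n ltac:(unfold n; lia)). unfold Rdist in HN1.
   replace (RS_sum f g l p nu - I) with ((RS_sum f g l p nu - RSn n) + (RSn n - I)) by ring.
   eapply Rle_lt_trans. apply Rabs_triang. lra.
 - set (A := Rabs (I - f xi * (g b - g a))).
   assert (Hlim : forall B, (forall n, Rabs (RSn n - f xi * (g b - g a)) <= B) -> A <= B).
   { intros B HB. apply le_epsilon. intros eps He. destruct (HI eps He) as [N HN].
     specialize (HN N (le_n _)). specialize (HB N). unfold Rdist in HN. unfold A.
     replace (I - f xi * (g b - g a)) with ((I - RSn N) + (RSn N - f xi * (g b - g a))) by ring.
     eapply Rle_trans. apply Rabs_triang. rewrite Rabs_minus_sym. lra. }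
   assert (Hem1 : Rbar_le 0 em1) by (apply sup_dev_nonneg; lra).
   assert (Htm1 : Rbar_le 0 tm1) by (apply sup_dev_nonneg; lra).
   assert (HS1 : forall s, Sv = Finite s -> A <= 2 * s).
   { intros s Es. destruct (Rbar_plus_fin _ _ (wsum_nonneg _ g a b theta ltac:(lra) (fun k => shift_nonneg _ eta k Hem1 Hen))
       (wsum_nonneg (fun k => Finite (theta k)) f a b eta ltac:(lra) (fun k => Htn k))) as [W1 [W2 [E1 [E2 E3]]]].
     unfold Sv in Es. rewrite Es. simpl; auto.
     unfold Sv in Es. rewrite E3 in Es. inversion Es. apply Hlim. intros n.
     destruct (RSn_Ec a b f g xi n Hab) as [R1 [R2 R3]]. unfold RSn. rewrite R1.
     apply (main_S a b f g xi eta theta _ W1 W2); auto. }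
   assert (HS2 : forall s, Stv = Finite s -> A <= 2 * s).
   { intros s Es. destruct (Rbar_plus_fin _ _ (wsum_nonneg _ f a b eta ltac:(lra) (fun k => shift_nonneg _ theta k Htm1 Htn))
       (wsum_nonneg (fun k => Finite (eta k)) g a b theta ltac:(lra) (fun k => Hen k))) as [W1 [W2 [E1 [E2 E3]]]].
     unfold Stv in Es. rewrite Es. simpl; auto.
     unfold Stv in Es. rewrite E3 in Es. inversion Es. apply Hlim. intros n.
     destruct (RSn_Ec a b f g xi n Hab) as [R1 [R2 R3]]. unfold RSn. rewrite R1.
     apply (main_St a b f g xi eta theta _ W1 W2); auto. }
   assert (HS0 : Rbar_le 0 Sv).
   { unfold Sv. replace (Finite 0) with (Rbar_plus 0 0) by (simpl; f_equal; ring).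
     apply Rbar_plus_le_compat. apply wsum_nonneg. lra. intros k; apply shift_nonneg; auto.
     apply wsum_nonneg. lra. intros k; simpl; auto. }
   assert (HSt0 : Rbar_le 0 Stv).
   { unfold Stv. replace (Finite 0) with (Rbar_plus 0 0) by (simpl; f_equal; ring).
     apply Rbar_plus_le_compat. apply wsum_nonneg. lra. intros k; apply shift_nonneg; auto.
     apply wsum_nonneg. lra. intros k; simpl; auto. }
   clearbody Sv Stv. clear Hlim.
   destruct Sv as [s| |]; destruct Stv as [t| |]; simpl in HS0, HSt0; try contradiction.
   + specialize (HS1 s eq_refl). specialize (HS2 t eq_refl). simpl.
     unfold Rmin. destruct (Rle_dec s t); lra.
   + specialize (HS1 s eq_refl). simpl. lra.
   + specialize (HS2 t eq_refl). simpl. lra.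
   + simpl in HS. destruct HS; contradiction.
Qed.
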